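(* For every integer $k\ge1$, \begin{align*} \sum_{n=1}^\infty\frac{H_n\,P_k(H_n,\dots,H_n^{(k)})}{(n+1)^2}&=(k+2)\zeta(k+3)-\zeta(k+2,1),\\ \frac12\sum_{n=1}^\infty\frac{\big(H_n^2+H_n^{(2)}\big)P_k(H_n,\dots,H_n^{(k)})}{(n+1)^2}&=\binom{k+3}{2}\zeta(k+4)-(k+2)\zeta(k+3,1)-\zeta(k+2,2). \end{align*}
   Context: $H_n^{(r)}=\sum_{t=1}^n t^{-r}$, $H_n=H_n^{(1)}$. For $n\ge1$, $P_n(y_1,\dots,y_n)=\sum_{m_1+2m_2+\cdots=n}\frac{(-1)^{m_2+m_4+\cdots}}{m_1!m_2!\cdots}\prod_{i\ge1}(y_i/i)^{m_i}$. Multiple zeta values: $\zeta(a_1,a_2)=\sum_{n_1>n_2\ge1}n_1^{-a_1}n_2^{-a_2}$ for $a_1\ge2$, $a_2\ge1$; $\zeta$ of one argument is the Riemann zeta function. *)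

(* Defs.v *)
From Stdlib Require Import Reals Lra Lia Arith.
Open Scope R_scope.

Fixpoint Hr (r n : nat) : R :=
  match n with
  | O => 0
  | S m => Hr r m + / (INR (S m)) ^ r
  end.

(* Partition sum: Psum y j n = sum over (m_1,...,m_j) with
   m_1 + 2 m_2 + ... + j m_j = n of
   prod_{i<=j} (-1)^{[i even] m_i} / m_i! * (y_i / i)^{m_i}. *)
Fixpoint Psum (y : nat -> R) (j n : nat) : R :=
  match j with
  | O => if Nat.eqb n 0 then 1 else 0
  | S j' =>
      sum_f_R0 (fun m =>
        (if Nat.even (S j') then (-1) ^ m else 1)
        / INR (fact m) * (y (S j') / INR (S j')) ^ m
        * Psum y j' (n - m * S j')%nat) (n / S j')
  end.

(* P_n(y_1,...,y_n): sum over all partitions m_1 + 2 m_2 + ... = n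
   (only i <= n can have m_i > 0). *)
Definition P (n : nat) (y : nat -> R) : R := Psum y n n.

Definition is_zeta1 (s : nat) (z : R) : Prop :=
  infinite_sum (fun n => / (INR (S n)) ^ s) z.

(* z = zeta(a1,a2) = sum_{n1>n2>=1} n1^{-a1} n2^{-a2}, summed as
   sum_{n1>=1} n1^{-a1} * (sum_{n2=1}^{n1-1} n2^{-a2}) (positive terms). *)
Definition is_zeta2 (a1 a2 : nat) (z : R) : Prop :=
  infinite_sum (fun n => / (INR (S n)) ^ a1 * Hr a2 n) z.

(* Main.v *)
Require Import Defs.
From Stdlib Require Import Reals Lra Lia Arith.
From Coquelicot Require Import Coquelicot.
Open Scope R_scope.

Fixpoint sumN (f : nat -> R) (n : nat) : R :=
  match n with O => 0 | S n' => sumN f n' + f n' end.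

Lemma sumN_S f n : sumN f (S n) = sumN f n + f n.
Proof. reflexivity. Qed.

Lemma sumN_f_R0 f n : sumN f (S n) = sum_f_R0 f n.
Proof. induction n as [|n IH]; simpl in *; [ring| rewrite <- IH; simpl; ring]. Qed.

Lemma sumN_ext f g n : (forall i, (i < n)%nat -> f i = g i) -> sumN f n = sumN g n.
Proof. induction n; simpl; intros H; [reflexivity|]. rewrite IHn, H; auto. Qed.

Lemma sumN_plus f g n : sumN (fun i => f i + g i) n = sumN f n + sumN g n.
Proof. induction n; simpl; [ring| rewrite IHn; ring]. Qed.
Lemma sumN_minus f g n : sumN (fun i => f i - g i) n = sumN f n - sumN g n.
Proof. induction n; simpl; [ring| rewrite IHn; ring]. Qed.
Lemma sumN_scal c f n : sumN (fun i => c * f i) n = c * sumN f n.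
Proof. induction n; simpl; [ring| rewrite IHn; ring]. Qed.
Lemma sumN_le f g n : (forall i, (i < n)%nat -> f i <= g i) -> sumN f n <= sumN g n.
Proof. induction n; simpl; intros H; [lra|]. pose proof (H n (Nat.lt_succ_diag_r n)).
  assert (sumN f n <= sumN g n) by (apply IHn; intros; apply H; lia). lra. Qed.
Lemma sumN_nonneg f n : (forall i, (i < n)%nat -> 0 <= f i) -> 0 <= sumN f n.
Proof. induction n; simpl; intros H; [lra|].
  assert (0 <= sumN f n) by (apply IHn; intros; apply H; lia). pose proof (H n (Nat.lt_succ_diag_r n)). lra. Qed.
Lemma sumN_telescope f n : sumN (fun i => f (S i) - f i) n = f n - f O.
Proof. induction n; simpl; [ring| rewrite IHn; ring]. Qed.
Lemma sumN_shift f n : sumN f (S n) = f O + sumN (fun i => f (S i)) n.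
Proof. induction n; simpl in *; [ring| rewrite IHn; ring]. Qed.
Lemma sumN_zero f n : (forall i, (i < n)%nat -> f i = 0) -> sumN f n = 0.
Proof. intros H; induction n; simpl; auto. rewrite IHn, H; [ring|lia|intros; apply H; lia]. Qed.
Lemma sumN_swap (f : nat -> nat -> R) n m :
  sumN (fun i => sumN (fun j => f i j) m) n = sumN (fun j => sumN (fun i => f i j) n) m.
Proof. induction n; simpl. { induction m; simpl; auto; rewrite <- IHm; ring. }
  rewrite IHn, <- sumN_plus. reflexivity. Qed.
Lemma sumN_abs f n : Rabs (sumN f n) <= sumN (fun i => Rabs (f i)) n.
Proof. induction n; simpl. rewrite Rabs_R0; lra.
  eapply Rle_trans; [apply Rabs_triang|]. lra. Qed.

Lemma is_series_sumN a l : is_series a l <-> is_lim_seq (sumN a) l.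
Proof.
  rewrite is_series_Reals. split; intros H.
  - apply is_lim_seq_incr_1. apply is_lim_seq_Reals.
    intros e he. destruct (H e he) as [N HN]. exists N. intros n hn.
    rewrite sumN_f_R0. now apply HN.
  - apply is_lim_seq_incr_1 in H. apply is_lim_seq_Reals in H.
    intros e he. destruct (H e he) as [N HN]. exists N. intros n hn.
    rewrite <- sumN_f_R0. now apply HN.
Qed.

Lemma is_series_plusR a b la lb : is_series a la -> is_series b lb ->
  is_series (fun n => a n + b n) (la + lb).
Proof. intros H1 H2; exact (@is_series_plus _ R_NormedModule a b la lb H1 H2). Qed.
Lemma is_series_minusR a b la lb : is_series a la -> is_series b lb ->
  is_series (fun n => a n - b n) (la - lb).
Proof. intros H1 H2; exact (@is_series_minus _ R_NormedModule a b la lb H1 H2). Qed.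
Lemma is_series_scalR c a l : is_series a l -> is_series (fun n => c * a n) (c * l).
Proof. intros H1; exact (@is_series_scal_l _ R_NormedModule c a l H1). Qed.
Lemma is_series_extR (a b : nat -> R) (l : R) : (forall n, a n = b n) -> is_series a l -> is_series b l.
Proof. intros H H1; exact (@is_series_ext _ R_NormedModule a b l H H1). Qed.

Lemma Series_sumN_le a M : (forall n, 0 <= a n) -> ex_series a ->
  (forall n, sumN a n <= M) -> Series a <= M.
Proof.
  intros Ha [l Hl] HM. rewrite (is_series_unique a l Hl).
  apply is_series_sumN in Hl.
  assert (Rbar_le l M). { apply (is_lim_seq_le (sumN a) (fun _ => M)); auto. apply is_lim_seq_const. }
  simpl in H; auto.
Qed.

Lemma ex_series_bounded a M : (forall n, 0 <= a n) -> (forall n, sumN a n <= M) -> ex_series a.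
Proof.
  intros Ha HM.
  assert (G: Un_growing (sumN a)). { intros n; simpl. specialize (Ha n); lra. }
  destruct (growing_cv _ G) as [l Hl]. { exists M. intros x [n ->]. apply HM. }
  exists l. apply is_series_sumN. now apply is_lim_seq_Reals.
Qed.

Lemma ex_series_cmp a b : (forall n, Rabs (a n) <= b n) -> ex_series b -> ex_series a.
Proof. intros H Hb. apply (ex_series_le a b); auto. Qed.

Lemma Series_abs_le a b : (forall n, Rabs (a n) <= b n) -> ex_series b -> Rabs (Series a) <= Series b.
Proof.
  intros H Hb. assert (ex_series (fun n => Rabs (a n))).
  { apply (ex_series_cmp _ b); auto. intros; rewrite Rabs_Rabsolu; auto. }
  eapply Rle_trans. apply Series_Rabs; auto. apply Series_le; auto.
  intros; split; auto; apply Rabs_pos.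
Qed.


Lemma Hr_S r n : Hr r (S n) = Hr r n + / INR (S n) ^ r.
Proof. reflexivity. Qed.

Lemma Hr_sumN r n : Hr r n = sumN (fun i => / INR (S i) ^ r) n.
Proof. induction n; simpl; auto. rewrite IHn; reflexivity. Qed.

Lemma INR_S_pos n : 0 < INR (S n).
Proof. apply lt_0_INR; lia. Qed.
Lemma INR_S_ge1 n : 1 <= INR (S n).
Proof. rewrite S_INR; pose proof (pos_INR n); lra. Qed.

Lemma Hr_nonneg r n : 0 <= Hr r n.
Proof. induction n; [simpl; lra| rewrite Hr_S]. pose proof (pow_lt _ r (INR_S_pos n)).
  pose proof (Rinv_0_lt_compat _ H). lra. Qed.

Lemma H1_le n : Hr 1 n <= INR n.
Proof. induction n; [simpl; lra|]. rewrite Hr_S. pose proof (S_INR n).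
  pose proof (INR_S_ge1 n). rewrite pow_1. assert (/ INR (S n) <= 1).
  { rewrite <- Rinv_1. apply Rinv_le_contravar; lra. } lra. Qed.


Lemma inv_sq_partial N : sumN (fun n => / INR (S n) ^ 2) (S N) <= 2 - / INR (S N).
Proof.
  induction N.
  - simpl. lra.
  - change (sumN (fun n => / INR (S n) ^ 2) (S (S N))) with
      (sumN (fun n => / INR (S n) ^ 2) (S N) + / INR (S (S N)) ^ 2).
    assert (/ INR (S (S N)) ^ 2 <= / INR (S N) - / INR (S (S N))).
    { rewrite (S_INR (S N)). pose proof (INR_S_pos N). 
      replace (/ INR (S N) - / (INR (S N) + 1)) with (/ (INR (S N) * (INR (S N) + 1))) by (field; lra).
      apply Rinv_le_contravar. nra. nra. }
    lra.
Qed.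

Lemma inv_sq_bound N : sumN (fun n => / INR (S n) ^ 2) N <= 2.
Proof. destruct N. simpl; lra. pose proof (inv_sq_partial N). pose proof (INR_S_pos N).
  pose proof (Rinv_0_lt_compat _ H0). lra. Qed.

Lemma inv_sq_nonneg n : 0 <= / INR (S n) ^ 2.
Proof. pose proof (INR_S_pos n). apply Rlt_le, Rinv_0_lt_compat, pow_lt; auto. Qed.

Lemma ex_inv_sq : ex_series (fun n => / INR (S n) ^ 2).
Proof. apply (ex_series_bounded _ 2). apply inv_sq_nonneg. apply inv_sq_bound. Qed.

Lemma H2_le2 n : Hr 2 n <= 2.
Proof. rewrite Hr_sumN. apply inv_sq_bound. Qed.

Lemma Hw_partial N : sumN (fun n => Hr 1 n / (INR (S n) * INR (S (S n)))) N
   = 1 - (Hr 1 N + 1) / INR (S N).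
Proof.
  induction N. simpl. field.
  rewrite sumN_S, IHN. rewrite Hr_S. rewrite pow_1.
  rewrite (S_INR (S N)). pose proof (INR_S_pos N). field. lra.
Qed.

Lemma ex_Hw : ex_series (fun n => Hr 1 n / (INR (S n) * INR (S (S n)))).
Proof.
  apply (ex_series_bounded _ 1).
  - intros n. pose proof (Hr_nonneg 1 n). pose proof (INR_S_pos n). pose proof (INR_S_pos (S n)).
    apply Rmult_le_pos; auto. apply Rlt_le, Rinv_0_lt_compat, Rmult_lt_0_compat; auto.
  - intros N. rewrite Hw_partial. pose proof (Hr_nonneg 1 N). pose proof (INR_S_pos N).
    assert (0 <= (Hr 1 N + 1) / INR (S N)) by (apply Rmult_le_pos; [lra| apply Rlt_le, Rinv_0_lt_compat; auto]).
    lra.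
Qed.

Definition gmaj (n : nat) : R := (1 + Hr 1 n) / INR (S n) ^ 2.

Lemma ex_gmaj : ex_series gmaj.
Proof.
  apply (ex_series_cmp _ (fun n => / INR (S n) ^ 2 + 2 * (Hr 1 n / (INR (S n) * INR (S (S n)))))).
  - intros n. unfold gmaj. pose proof (Hr_nonneg 1 n) as h0. pose proof (INR_S_pos n) as a0.
    pose proof (INR_S_ge1 n) as a1. rewrite (S_INR (S n)).
    set (a := INR (S n)) in *. set (h := Hr 1 n) in *.
    rewrite Rabs_pos_eq.
    2:{ apply Rmult_le_pos; [lra|]. apply Rlt_le, Rinv_0_lt_compat, pow_lt; auto. }
    assert (E: / a ^ 2 + 2 * (h / (a * (a + 1))) - (1 + h) / a ^ 2 = h * (a - 1) * / (a ^ 2 * (a + 1))) by (field; lra).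
    assert (0 <= h * (a - 1) * / (a ^ 2 * (a + 1))).
    { apply Rmult_le_pos. apply Rmult_le_pos; lra. apply Rlt_le, Rinv_0_lt_compat. nra. }
    lra.
  - apply (ex_series_plus (fun n => / INR (S n) ^ 2) (fun n => 2 * (Hr 1 n / (INR (S n) * INR (S (S n)))))).
    apply ex_inv_sq. apply (ex_series_scal_l 2 (fun n => Hr 1 n / (INR (S n) * INR (S (S n))))). apply ex_Hw.
Qed.

Lemma H1_split j N : Hr 1 N <= INR j + INR N / INR (S j).
Proof.
  induction N.
  - simpl. pose proof (pos_INR j). unfold Rdiv; rewrite Rmult_0_l; lra.
  - rewrite Hr_S, pow_1. destruct (le_lt_dec N j) as [h|h].
    +
      destruct (le_lt_dec (S N) j) as [h2|h2].
      * pose proof (H1_le (S N)). rewrite Hr_S, pow_1 in H. apply le_INR in h2.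
        assert (0 <= INR (S N) / INR (S j)) by (apply Rmult_le_pos; [apply pos_INR| apply Rlt_le, Rinv_0_lt_compat, INR_S_pos]).
        lra.
      * assert (N = j) by lia. subst. 
        assert (/ INR (S j) <= INR (S j) / INR (S j) - INR j / INR (S j)).
        { rewrite S_INR. pose proof (pos_INR j). right. field. lra. }
        lra.
    + assert (/ INR (S N) <= / INR (S j)).
      { apply Rinv_le_contravar. apply INR_S_pos. apply le_INR; lia. }
      rewrite S_INR at 2. unfold Rdiv in *. lra.
Qed.

Lemma H1_over_lim : is_lim_seq (fun N => Hr 1 N / INR (S N)) 0.
Proof.
  apply is_lim_seq_Reals. intros e he.
  destruct (INR_unbounded (2/e)) as [j Hj].
  destruct (INR_unbounded (2 * INR j / e)) as [N HN].
  exists N. intros n hn. unfold R_dist. rewrite Rminus_0_r.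
  pose proof (Hr_nonneg 1 n). pose proof (INR_S_pos n) as pn. pose proof (INR_S_pos j) as pj.
  rewrite Rabs_pos_eq by (apply Rmult_le_pos; [lra| apply Rlt_le, Rinv_0_lt_compat; auto]).
  pose proof (H1_split j n) as Hs.
  apply le_INR in hn.
  pose proof (S_INR n) as En. pose proof (S_INR j) as Ej.
  set (a := INR (S n)) in *. set (b := INR (S j)) in *.
  assert (Hb : 1 / b < e / 2).
  { apply (Rmult_lt_reg_r b); auto. replace (1 / b * b) with 1 by (field; lra).
    assert (2 / e * (e/2) = 1) by (field; lra).
    assert (2/e * (e/2) < b * (e/2)) by (apply Rmult_lt_compat_r; lra). lra. }
  assert (Ha : INR j / a < e / 2).
  { apply (Rmult_lt_reg_r a); auto. replace (INR j / a * a) with (INR j) by (field; lra).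
    assert (2 * INR j / e * (e/2) = INR j) by (field; lra).
    assert (2 * INR j / e * (e/2) < a * (e/2)) by (apply Rmult_lt_compat_r; lra). lra. }
  assert (Hn : INR n / b / a <= 1 / b).
  { unfold Rdiv. rewrite Rmult_assoc, (Rmult_comm (/b)), <- Rmult_assoc.
    apply Rmult_le_compat_r. apply Rlt_le, Rinv_0_lt_compat; auto.
    apply (Rmult_le_reg_r a); auto. rewrite Rmult_assoc, Rinv_l, Rmult_1_r by lra. lra. }
  assert (Hr 1 n / a <= INR j / a + INR n / b / a).
  { unfold Rdiv. rewrite <- Rmult_plus_distr_r. apply Rmult_le_compat_r.
    apply Rlt_le, Rinv_0_lt_compat; auto. exact Hs. }
  lra.
Qed.

Fixpoint E (k N : nat) : R :=
  match N with
  | O => match k with O => 1 | S _ => 0 end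
  | S N' => E k N' + match k with O => 0 | S k' => E k' N' / INR (S N') end
  end.

Lemma E_S k N : E k (S N) = E k N + match k with O => 0 | S k' => E k' N / INR (S N) end.
Proof. reflexivity. Qed.

Definition sg (i : nat) : R := if Nat.even i then -1 else 1.

Lemma sg_S i : sg (S i) = (-1) ^ i.
Proof.
  induction i using lt_wf_ind. destruct i as [|[|i]].
  - unfold sg; simpl; ring.
  - unfold sg; simpl; ring.
  - assert (E: sg (S (S (S i))) = sg (S i)) by (unfold sg; now rewrite Nat.even_succ_succ).
    rewrite E, H by lia. simpl. ring.
Qed.

Lemma E_0 N : E 0 N = 1.
Proof. induction N; [reflexivity|]. rewrite E_S, IHN; ring. Qed.

Lemma E_nonneg k N : 0 <= E k N.
Proof.
  revert k; induction N; intros k. simpl; destruct k; lra. rewrite E_S.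
  destruct k. pose proof (IHN 0%nat); lra.
  pose proof (IHN (S k)). pose proof (IHN k). pose proof (INR_S_pos N).
  assert (0 <= E k N / INR (S N)) by (apply Rmult_le_pos; [auto| apply Rlt_le, Rinv_0_lt_compat; auto]). lra.
Qed.

Lemma sumN_trunc_tail f n k : (n <= k)%nat -> (forall i, (n <= i < k)%nat -> f i = 0) -> sumN f k = sumN f n.
Proof.
  intros H Hz. induction k. assert (n = 0%nat) by lia. subst; auto.
  destruct (Nat.eq_dec n (S k)). subst; auto.
  rewrite sumN_S, IHk, Hz; [ring|lia|lia|intros; apply Hz; lia].
Qed.

Lemma alt_tele f m : sumN (fun i => (-1) ^ i * (f i + f (S i))) m = f O - (-1) ^ m * f m.
Proof. induction m; simpl sumN. simpl; ring. rewrite IHm. simpl. ring. Qed.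

Lemma Hr_SS r N : Hr r (S N) = Hr r N + (/ INR (S N)) ^ r.
Proof. rewrite Hr_S. rewrite pow_inv. reflexivity. Qed.

Lemma E_newton N n : INR n * E n N = sumN (fun i => sg (S i) * Hr (S i) N * E (n - S i) N) n.
Proof.
  revert n. induction N; intros n.
  - rewrite sumN_zero. destruct n; simpl; ring. intros i _. simpl Hr. ring.
  - destruct n as [|m].
    { simpl. ring. }
    set (a := / INR (S N)).
    assert (HE : forall j, E j (S N) = E j N + match j with O => 0 | S k => a * E k N end).
    { intros j; destruct j; rewrite E_S; unfold a; [ring| unfold Rdiv; ring]. }
    rewrite (sumN_ext _ (fun i => sg (S i) * Hr (S i) N * E (S m - S i) N
       + sg (S i) * Hr (S i) N * (match (S m - S i)%nat with O => 0 | S k => a * E k N end)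
       + (-1) ^ i * (a ^ (S i) * E (S m - S i) N
           + a ^ (S i) * (match (S m - S i)%nat with O => 0 | S k => a * E k N end)))).
    2:{ intros i hi. rewrite HE, Hr_SS, sg_S. fold a. ring. }
    rewrite !sumN_plus. rewrite <- IHN.
    rewrite sumN_S. replace (S m - S m)%nat with O by lia.
    rewrite (sumN_ext _ (fun i => a * (sg (S i) * Hr (S i) N * E (m - S i) N))).
    2:{ intros i hi. replace (S m - S i)%nat with (S (m - S i)) by lia. ring. }
    rewrite sumN_scal, <- IHN.
    set (f := fun i => a ^ S i * E (m - i) N).
    rewrite (sumN_ext _ (fun i => (-1) ^ i * (f i + (if (i <? m)%nat then f (S i) else 0)))).
    2:{ intros i hi. unfold f. simpl Nat.sub. destruct (Nat.ltb_spec i m).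
        - replace (m - i)%nat with (S (m - S i)) by lia. replace (m - S i)%nat with (m - S i)%nat by lia.
          simpl. ring.
        - replace (m - i)%nat with O by lia. ring. }
    rewrite sumN_S.
    rewrite (sumN_ext _ (fun i => (-1) ^ i * (f i + f (S i)))).
    2:{ intros i hi. destruct (Nat.ltb_spec i m); [reflexivity|lia]. }
    rewrite alt_tele. rewrite Nat.ltb_irrefl.
    unfold f. rewrite Nat.sub_diag, Nat.sub_0_r. rewrite HE.
    rewrite (S_INR m). simpl pow. ring.
Qed.


Definition coef (y : nat -> R) (J m : nat) : R :=
  (if Nat.even J then (-1) ^ m else 1) / INR (fact m) * (y J / INR J) ^ m.

Lemma Psum_S y j n : Psum y (S j) n =
  sum_f_R0 (fun m => coef y (S j) m * Psum y j (n - m * S j)) (n / S j).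
Proof. reflexivity. Qed.

Lemma coef_0 y J : coef y J 0 = 1.
Proof. unfold coef. simpl. destruct (Nat.even J); field. Qed.

Lemma coef_rec y J m : (1 <= J)%nat ->
  INR (S m) * INR J * coef y J (S m) = sg J * y J * coef y J m.
Proof.
  intros HJ. unfold coef, sg. assert (INR J <> 0) by (apply not_0_INR; lia).
  pose proof (INR_fact_neq_0 m). pose proof (INR_S_pos m).
  rewrite fact_simpl, mult_INR. destruct (Nat.even J); simpl pow; field; lra.
Qed.

Lemma Psum_0 y j : Psum y j 0 = 1.
Proof. induction j; [reflexivity|]. rewrite Psum_S.
  replace (0 / S j)%nat with 0%nat by reflexivity. simpl sum_f_R0.
  replace (0 - 0 * S j)%nat with 0%nat by lia. rewrite coef_0, IHj. ring. Qed.

Lemma sum_f_R0_sumN f L : sum_f_R0 f L = sumN f (S L).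
Proof. now rewrite sumN_f_R0. Qed.

Lemma sumN_trunc_if (P : nat -> bool) f L L' : (L' <= L)%nat ->
  (forall m, (m < L)%nat -> (P m = true <-> (m < L')%nat)) ->
  sumN (fun m => if P m then f m else 0) L = sumN f L'.
Proof.
  intros H HP. rewrite (sumN_trunc_tail _ L' L); auto.
  - apply sumN_ext. intros i hi. destruct (P i) eqn:E. auto.
    assert (P i = true) by (apply (proj2 (HP i ltac:(lia))); lia). congruence.
  - intros i hi. destruct (P i) eqn:E; auto. apply HP in E; lia.
Qed.

Lemma Psum_newton y j n : INR n * Psum y j n =
  sumN (fun i => if (S i <=? n)%nat then sg (S i) * y (S i) * Psum y j (n - S i) else 0) j.
Proof.
  revert n. induction j; intros n.
  - simpl. destruct (Nat.eqb_spec n 0); [subst; simpl; ring| ring].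
  - rewrite Psum_S, sumN_S. set (J := S j).
    assert (HJ : J <> 0%nat) by (unfold J; lia).
    rewrite scal_sum.
    assert (Hmj : forall m, (m <= n / J)%nat -> (m * J <= n)%nat).
    { intros m hm. pose proof (Nat.Private_NDivProp.mul_div_le n J HJ). nia. }
    rewrite (sum_eq _ (fun m => coef y J m * INR (m * J) * Psum y j (n - m * J)
        + coef y J m * (INR (n - m * J) * Psum y j (n - m * J)))).
    2:{ intros m hm. specialize (Hmj m hm).
        replace (INR n) with (INR (m * J) + INR (n - m * J)) by (rewrite <- plus_INR; f_equal; lia).
        ring. }
    rewrite plus_sum.
    rewrite (Rplus_comm (sum_f_R0 _ _)). f_equal.
    +
      rewrite (sum_eq _ (fun m => sumN (fun i => coef y J m *
          (if (S i <=? n - m * J)%nat then sg (S i) * y (S i) * Psum y j (n - m * J - S i) else 0)) j)).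
      2:{ intros m hm. rewrite IHj. rewrite <- sumN_scal. reflexivity. }
      rewrite sum_f_R0_sumN, sumN_swap. apply sumN_ext. intros i hi.
      destruct (Nat.leb_spec (S i) n) as [Hin|Hin].
      * unfold J; rewrite Psum_S; fold J. rewrite sum_f_R0_sumN. rewrite <- sumN_scal.
        rewrite <- (sumN_trunc_if (fun m => (S i <=? n - m * J)%nat)
             (fun m => sg (S i) * y (S i) * (coef y J m * Psum y j (n - S i - m * J))) (S (n / J))).
        -- apply sumN_ext. intros m hm. destruct (Nat.leb_spec (S i) (n - m * J)).
           replace (n - m * J - S i)%nat with (n - S i - m * J)%nat by lia. ring. ring.
        -- apply le_n_S. apply Nat.Private_NDivProp.div_le_mono; lia.
        -- intros m hm. rewrite Nat.leb_le. split; intros h.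
           ++ apply le_n_S. apply Nat.div_le_lower_bound; auto. nia.
           ++ assert (m <= (n - S i) / J)%nat by lia. pose proof (Nat.Private_NDivProp.mul_div_le (n - S i) J HJ). nia.
      * rewrite sumN_zero; auto. intros m hm. destruct (Nat.leb_spec (S i) (n - m * J)). lia. ring.
    +
      destruct (Nat.leb_spec J n) as [Hn|Hn].
      * assert (Hd : (n / J = S ((n - J) / J))%nat).
        { replace n with (1 * J + (n - J))%nat at 1 by lia. rewrite Nat.div_add_l; auto. }
        rewrite Hd. rewrite sum_f_R0_sumN, sumN_shift. simpl (0 * J)%nat. rewrite Rmult_0_r, Rmult_0_l, Rplus_0_l.
        unfold J; rewrite Psum_S; fold J. rewrite sum_f_R0_sumN. rewrite <- sumN_scal.
        apply sumN_ext. intros m hm.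
        rewrite mult_INR. replace (n - S m * J)%nat with (n - J - m * J)%nat by (simpl; lia).
        assert (E1: coef y J (S m) * (INR (S m) * INR J) = sg J * y J * coef y J m).
        { rewrite <- coef_rec by (unfold J; lia). ring. }
        rewrite E1. ring.
      * rewrite Nat.div_small by lia. simpl. ring.
Qed.

Lemma P_eq_E k N : P k (fun i => Hr i N) = E k N.
Proof.
  unfold P. set (y := fun i => Hr i N).
  assert (forall n, (n <= k)%nat -> Psum y k n = E n N).
  { intros n. induction n as [n IH] using lt_wf_ind. intros hn.
    destruct n as [|m]. rewrite Psum_0, E_0; auto.
    pose proof (Psum_newton y k (S m)) as H1.
    rewrite (sumN_trunc_tail _ (S m) k) in H1; auto.
    2:{ intros i hi. destruct (Nat.leb_spec (S i) (S m)); [lia|auto]. }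
    rewrite (sumN_ext _ (fun i => sg (S i) * Hr (S i) N * E (S m - S i) N)) in H1.
    2:{ intros i hi. destruct (Nat.leb_spec (S i) (S m)); [|lia]. rewrite IH by lia. reflexivity. }
    rewrite <- E_newton in H1. pose proof (INR_S_pos m).
    apply (Rmult_eq_reg_l (INR (S m))); auto; lra. }
  apply H; auto.
Qed.


Lemma lim0_bound (v w : nat -> R) : (forall n, Rabs (v n) <= w n) -> is_lim_seq w 0 -> is_lim_seq v 0.
Proof.
  intros H Hw. apply (is_lim_seq_le_le (fun n => - w n) v w).
  - intros n. specialize (H n). pose proof (Rabs_le_between' (v n) 0 (w n)). 
    unfold Rabs in H; destruct (Rcase_abs (v n)); lra.
  - replace (Finite 0) with (Rbar_opp 0) by (simpl; f_equal; ring). exact (proj1 (is_lim_seq_opp w 0) Hw).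
  - auto.
Qed.

Lemma lim_inv_S (c : R) : is_lim_seq (fun n => c / INR (S n)) 0.
Proof.
  apply is_lim_seq_Reals. intros e he.
  destruct (INR_unbounded (Rabs c / e)) as [N HN]. exists N. intros n hn.
  unfold R_dist. rewrite Rminus_0_r. pose proof (INR_S_pos n).
  unfold Rdiv. rewrite Rabs_mult, Rabs_inv, (Rabs_pos_eq (INR (S n))) by lra.
  apply le_INR in hn. rewrite S_INR in *.
  apply Rmult_lt_reg_r with (INR n + 1). lra. rewrite Rmult_assoc, Rinv_l, Rmult_1_r by lra.
  assert (Rabs c / e * e = Rabs c) by (field; lra).
  assert (Rabs c / e * e < (INR n + 1) * e) by (apply Rmult_lt_compat_r; lra). lra.
Qed.

Definition dom (x y : R) := 0 <= x <= 1/4 /\ 0 <= y <= 1/4.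

Fixpoint Rp (x y : R) (i n : nat) : R :=
  match n with O => 1 | S n' => Rp x y i n' * ((INR (S n') + x) / (INR (S n') + INR i - y)) end.

Lemma Rp_S x y i n : Rp x y i (S n) = Rp x y i n * ((INR (S n) + x) / (INR (S n) + INR i - y)).
Proof. reflexivity. Qed.

Lemma den_pos x y i n : dom x y -> 3/4 <= INR (S n) + INR i - y.
Proof. intros [_ [hy1 hy2]]. pose proof (INR_S_ge1 n). pose proof (pos_INR i). lra. Qed.

Lemma Rp_pos x y i n : dom x y -> 0 < Rp x y i n.
Proof.
  intros D. induction n. simpl; lra. rewrite Rp_S. pose proof (den_pos x y i n D).
  pose proof (INR_S_pos n). destruct D as [[hx1 hx2] _].
  apply Rmult_lt_0_compat; auto. apply Rdiv_lt_0_compat; lra.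
Qed.

Lemma Rp_key x y i n : dom x y ->
  (INR i + 1 - y) * Rp x y i n = (INR n + 1 + INR i - y) * Rp x y (S i) n.
Proof.
  intros D. induction n.
  - simpl. ring.
  - rewrite !Rp_S. pose proof (den_pos x y i n D). pose proof (den_pos x y (S i) n D).
    rewrite S_INR in *. rewrite (S_INR i) in *.
    replace ((INR i + 1 - y) * (Rp x y i n * ((INR n + 1 + x) / (INR n + 1 + INR i - y))))
      with (((INR i + 1 - y) * Rp x y i n) * ((INR n + 1 + x) / (INR n + 1 + INR i - y))) by ring.
    rewrite IHn. field. lra.
Qed.

Lemma Rp_le1 x y i n : dom x y -> (1 <= i)%nat -> Rp x y i n <= 1.
Proof.
  intros D hi. induction n. simpl; lra. rewrite Rp_S.
  pose proof (Rp_pos x y i n D). pose proof (den_pos x y i n D). apply le_INR in hi.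
  destruct D as [[hx1 hx2] [hy1 hy2]]. simpl (INR 1) in hi.
  assert ((INR (S n) + x) / (INR (S n) + INR i - y) <= 1).
  { apply Rmult_le_reg_r with (INR (S n) + INR i - y). lra.
    unfold Rdiv. rewrite Rmult_assoc, Rinv_l, Rmult_1_r, Rmult_1_l by lra. lra. }
  assert (0 <= (INR (S n) + x) / (INR (S n) + INR i - y)).
  { pose proof (INR_S_pos n). apply Rmult_le_pos. lra. apply Rlt_le, Rinv_0_lt_compat; lra. }
  nra.
Qed.

Lemma Rp_le2 x y i n : dom x y -> (2 <= i)%nat -> Rp x y i n <= (1 + x) / (INR n + 1 + x).
Proof.
  intros D hi. induction n.
  - simpl. destruct D as [[hx1 hx2] _]. right. field. lra.
  - rewrite Rp_S. pose proof (Rp_pos x y i n D). pose proof (den_pos x y i n D). apply le_INR in hi.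
    destruct D as [[hx1 hx2] [hy1 hy2]]. simpl (INR 2) in hi. pose proof (INR_S_pos n).
    rewrite (S_INR n) in *.
    apply Rle_trans with ((1 + x) / (INR n + 1 + x) * ((INR n + 1 + x) / (INR n + 1 + INR i - y))).
    { apply Rmult_le_compat_r; auto. apply Rmult_le_pos. lra. apply Rlt_le, Rinv_0_lt_compat; lra. }
    replace ((1 + x) / (INR n + 1 + x) * ((INR n + 1 + x) / (INR n + 1 + INR i - y)))
      with ((1 + x) / (INR n + 1 + INR i - y)) by (field; lra).
    apply Rmult_le_compat_l. lra. apply Rinv_le_contravar; lra.
Qed.

Lemma Rp_sq x y i n : dom x y -> (1 <= i)%nat -> Rp x y i n ^ 2 <= (1 + x) / (INR n + 1 + x).
Proof.
  intros D hi. induction n.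
  - simpl. destruct D as [[hx1 hx2] _]. right. field. lra.
  - rewrite Rp_S. pose proof (Rp_pos x y i n D). pose proof (den_pos x y i n D). apply le_INR in hi.
    destruct D as [[hx1 hx2] [hy1 hy2]]. simpl (INR 1) in hi. pose proof (INR_S_pos n).
    rewrite (S_INR n) in *. set (d := INR n + 1 + INR i - y) in *. set (a := INR n + 1 + x) in *.
    assert (Hd : a + 1/2 <= d) by (unfold a, d; lra).
    assert (Ha : 0 < a) by (unfold a; lra).
    rewrite Rpow_mult_distr.
    apply Rle_trans with ((1 + x) / a * (a / d) ^ 2).
    { apply Rmult_le_compat_r; auto. apply pow_le. apply Rmult_le_pos. lra. apply Rlt_le, Rinv_0_lt_compat; lra. }
    replace (INR n + 1 + 1 + x) with (a + 1) by (unfold a; ring).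
    replace ((1 + x) / a * (a / d) ^ 2) with ((1 + x) * a / (d * d)) by (field; lra).
    apply Rmult_le_reg_r with (d * d * (a + 1)). nra.
    replace ((1 + x) * a / (d * d) * (d * d * (a + 1))) with ((1+x) * (a * (a+1))) by (field; lra).
    replace ((1 + x) / (a + 1) * (d * d * (a + 1))) with ((1+x) * (d * d)) by (field; lra).
    apply Rmult_le_compat_l. lra. nra.
Qed.

Lemma ratio_le2 x n : 0 <= x <= 1/4 -> (1 + x) / (INR n + 1 + x) <= 2 / INR (S n).
Proof.
  intros hx. rewrite S_INR. pose proof (pos_INR n).
  apply Rmult_le_reg_r with ((INR n + 1 + x) * (INR n + 1)). nra.
  replace ((1 + x) / (INR n + 1 + x) * ((INR n + 1 + x) * (INR n + 1))) with ((1+x) * (INR n + 1)) by (field; lra).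
  replace (2 / (INR n + 1) * ((INR n + 1 + x) * (INR n + 1))) with (2 * (INR n + 1 + x)) by (field; lra).
  nra.
Qed.

Lemma Rp_lim0 x y i : dom x y -> (1 <= i)%nat -> is_lim_seq (Rp x y i) 0.
Proof.
  intros D hi. apply is_lim_seq_Reals. intros e he.
  destruct (INR_unbounded (2 / (e * e))) as [N HN]. exists N. intros n hn.
  unfold R_dist. rewrite Rminus_0_r. pose proof (Rp_pos x y i n D).
  rewrite Rabs_pos_eq by lra.
  pose proof (Rp_sq x y i n D hi). pose proof (ratio_le2 x n (proj1 D)).
  apply le_INR in hn. pose proof (INR_S_pos n).
  assert (2 / INR (S n) < e * e).
  { apply Rmult_lt_reg_r with (INR (S n)); auto. unfold Rdiv; rewrite Rmult_assoc, Rinv_l, Rmult_1_r by lra.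
    assert (2 / (e*e) * (e*e) = 2) by (field; lra). rewrite S_INR.
    assert (2 / (e*e) * (e*e) < (INR n + 1) * (e * e)) by (apply Rmult_lt_compat_r; nra). lra. }
  destruct (Rlt_or_le (Rp x y i n) e); auto. simpl in *. nra.
Qed.

Lemma Gam_partial x y j N : dom x y -> (1 <= j)%nat ->
  sumN (Rp x y (S j)) N = (INR j + 1 - y) * (1 - Rp x y j N) / (INR j - y - x).
Proof.
  intros D hj. pose proof (le_INR _ _ hj) as hj'. simpl (INR 1) in hj'. destruct D as [[hx1 hx2] [hy1 hy2]] eqn:ED.
  induction N.
  - simpl. field. lra.
  - rewrite sumN_S, IHN, Rp_S. pose proof (Rp_key x y j N D) as K.
    pose proof (den_pos x y j N D). rewrite S_INR in *.
    assert (Rp x y (S j) N = (INR j + 1 - y) * Rp x y j N / (INR N + 1 + INR j - y)) by (rewrite K; field; lra).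
    rewrite H0. field. lra.
Qed.

Lemma lim_affine (u : nat -> R) a b : is_lim_seq u 0 -> is_lim_seq (fun n => a + b * u n) a.
Proof.
  intros H. pose proof (is_lim_seq_plus' _ _ a (b*0) (is_lim_seq_const a) (is_lim_seq_mult' _ _ b 0 (is_lim_seq_const b) H)) as H2.
  rewrite Rmult_0_r, Rplus_0_r in H2. exact H2.
Qed.

Lemma Gam_series x y j : dom x y -> (1 <= j)%nat ->
  is_series (Rp x y (S j)) ((INR j + 1 - y) / (INR j - y - x)).
Proof.
  intros D hj. apply is_series_sumN.
  apply (is_lim_seq_ext (fun N => (INR j + 1 - y) / (INR j - y - x) + (- ((INR j + 1 - y) / (INR j - y - x))) * Rp x y j N)).
  - intros N. rewrite Gam_partial; auto. pose proof (le_INR _ _ hj). simpl (INR 1) in H. destruct D as [[hx1 hx2] [hy1 hy2]].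
    field. lra.
  - apply lim_affine. apply Rp_lim0; auto.
Qed.

Definition psi x y i n := Rp x y i n / INR (S n).
Definition phi x y i n := Rp x y i n / INR (S n) ^ 2.

Lemma psi_term x y i n : dom x y ->
  (INR i + 1 - y) * psi x y i n - (INR i - y) * psi x y (S i) n = Rp x y (S i) n.
Proof.
  intros D. unfold psi. pose proof (INR_S_pos n).
  replace ((INR i + 1 - y) * (Rp x y i n / INR (S n))) with (((INR i + 1 - y) * Rp x y i n) / INR (S n)) by (field; lra).
  rewrite Rp_key; auto. rewrite S_INR in *. field. lra.
Qed.

Lemma phi_term x y i n : dom x y ->
  (INR i + 1 - y) * phi x y i n - (INR i - y) * phi x y (S i) n = psi x y (S i) n.
Proof.
  intros D. unfold psi, phi. pose proof (INR_S_pos n).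
  replace ((INR i + 1 - y) * (Rp x y i n / INR (S n) ^ 2)) with (((INR i + 1 - y) * Rp x y i n) / INR (S n) ^ 2) by (field; lra).
  rewrite Rp_key; auto. rewrite S_INR in *. field. lra.
Qed.

Lemma psi_nonneg x y i n : dom x y -> 0 <= psi x y i n.
Proof. intros D. unfold psi. pose proof (Rp_pos x y i n D). pose proof (INR_S_pos n).
  apply Rmult_le_pos; [lra|apply Rlt_le, Rinv_0_lt_compat; lra]. Qed.
Lemma phi_nonneg x y i n : dom x y -> 0 <= phi x y i n.
Proof. intros D. unfold phi. pose proof (Rp_pos x y i n D). pose proof (INR_S_pos n).
  apply Rmult_le_pos; [lra|apply Rlt_le, Rinv_0_lt_compat, pow_lt; lra]. Qed.
Lemma phi_le_psi x y i n : dom x y -> phi x y i n <= psi x y i n.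
Proof. intros D. unfold phi, psi. pose proof (Rp_pos x y i n D). pose proof (INR_S_ge1 n).
  unfold Rdiv. apply Rmult_le_compat_l. lra. apply Rinv_le_contravar. lra. replace (INR (S n) ^ 2) with (INR (S n) * INR (S n)) by ring. nra. Qed.

Lemma psi_le2 x y i n : dom x y -> (2 <= i)%nat -> psi x y i n <= 2 * / INR (S n) ^ 2.
Proof.
  intros D hi. unfold psi. pose proof (Rp_le2 x y i n D hi). pose proof (ratio_le2 x n (proj1 D)).
  pose proof (INR_S_pos n). 
  replace (2 * / INR (S n) ^ 2) with (2 / INR (S n) / INR (S n)) by (field; lra).
  unfold Rdiv. apply Rmult_le_compat_r. apply Rlt_le, Rinv_0_lt_compat; lra. unfold Rdiv in *; lra.
Qed.

Lemma ex_2inv_sq : ex_series (fun n => 2 * / INR (S n) ^ 2).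
Proof. apply (ex_series_scal_l 2 (fun n => / INR (S n) ^ 2)). apply ex_inv_sq. Qed.

Lemma ex_psi_2 x y i : dom x y -> (2 <= i)%nat -> ex_series (psi x y i).
Proof.
  intros D hi. apply (ex_series_cmp _ (fun n => 2 * / INR (S n) ^ 2)).
  intros n. rewrite Rabs_pos_eq by (apply psi_nonneg; auto). apply psi_le2; auto.
  apply ex_2inv_sq.
Qed.

Lemma Series_psi_le4 x y i : dom x y -> (2 <= i)%nat -> Series (psi x y i) <= 4.
Proof.
  intros D hi. apply Series_sumN_le. intros; apply psi_nonneg; auto. apply ex_psi_2; auto.
  intros N. apply Rle_trans with (sumN (fun n => 2 * / INR (S n) ^ 2) N).
  apply sumN_le; intros; apply psi_le2; auto. rewrite sumN_scal. pose proof (inv_sq_bound N). lra.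
Qed.

Lemma ex_psi x y i : dom x y -> (1 <= i)%nat -> ex_series (psi x y i).
Proof.
  intros D hi. destruct (Nat.eq_dec i 1) as [->|hne]; [|apply ex_psi_2; auto; lia].
  destruct (ex_psi_2 x y 2 D (le_n 2)) as [l2 H2].
  pose proof (Gam_series x y 1 D (le_n 1)) as G.
  exists (/ (INR 1 + 1 - y) * ((INR 1 + 1 - y) / (INR 1 - y - x) + (INR 1 - y) * l2)).
  apply (is_series_extR (fun n => / (INR 1 + 1 - y) * (Rp x y 2 n + (INR 1 - y) * psi x y 2 n))).
  - intros n. pose proof (psi_term x y 1 n D). destruct D as [_ [hy1 hy2]]. simpl (INR 1) in *. field_simplify_eq. 2: lra.
    lra.
  - apply is_series_scalR. apply is_series_plusR. auto. apply is_series_scalR. auto.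
Qed.

Lemma ex_phi x y i : dom x y -> ex_series (phi x y i).
Proof.
  intros D. destruct i as [|i].
  - destruct (ex_psi x y 1 D (le_n 1)) as [l1 H1].
    destruct (ex_series_cmp (phi x y 1) (psi x y 1)) as [l2 H2].
    { intros n. rewrite Rabs_pos_eq by (apply phi_nonneg; auto). apply phi_le_psi; auto. }
    { apply ex_psi; auto. }
    exists (/ (INR 0 + 1 - y) * (l1 + (INR 0 - y) * l2)).
    apply (is_series_extR (fun n => / (INR 0 + 1 - y) * (psi x y 1 n + (INR 0 - y) * phi x y 1 n))).
    + intros n. pose proof (phi_term x y 0 n D). destruct D as [_ [hy1 hy2]]. simpl (INR 0) in *. field_simplify_eq. 2: lra.
      lra.
    + apply is_series_scalR. apply is_series_plusR. auto. apply is_series_scalR. auto.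
  - apply (ex_series_cmp (phi x y (S i)) (psi x y (S i))).
    { intros n. rewrite Rabs_pos_eq by (apply phi_nonneg; auto). apply phi_le_psi; auto. }
    { apply ex_psi; auto; lia. }
Qed.

Definition Psi x y i := Series (psi x y i).
Definition Phi x y i := Series (phi x y i).

Lemma series_lin2 (b c : nat -> R) al be : ex_series b -> ex_series c ->
  is_series (fun n => al * b n - be * c n) (al * Series b - be * Series c).
Proof. intros Hb Hc. apply is_series_minusR; apply is_series_scalR; apply Series_correct; auto. Qed.

Lemma Psi_rel x y i : dom x y -> (1 <= i)%nat ->
  (INR i + 1 - y) * Psi x y i - (INR i - y) * Psi x y (S i) = (INR i + 1 - y) / (INR i - y - x).
Proof.
  intros D hi. unfold Psi.
  pose proof (series_lin2 (psi x y i) (psi x y (S i)) (INR i + 1 - y) (INR i - y) (ex_psi x y i D hi) (ex_psi x y (S i) D ltac:(lia))) as H.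
  apply (is_series_extR _ (Rp x y (S i))) in H. 2:{ intros; apply psi_term; auto. }
  pose proof (Gam_series x y i D hi). apply is_series_unique in H. apply is_series_unique in H0. congruence.
Qed.

Lemma Phi_rel x y i : dom x y ->
  (INR i + 1 - y) * Phi x y i - (INR i - y) * Phi x y (S i) = Psi x y (S i).
Proof.
  intros D. unfold Phi, Psi.
  pose proof (series_lin2 (phi x y i) (phi x y (S i)) (INR i + 1 - y) (INR i - y) (ex_phi x y i D) (ex_phi x y (S i) D)) as H.
  apply (is_series_extR _ (psi x y (S i))) in H. 2:{ intros; apply phi_term; auto. }
  apply is_series_unique in H. congruence.
Qed.

Lemma Series_ge0 a : (forall n, 0 <= a n) -> ex_series a -> 0 <= Series a.
Proof.
  intros H [l Hl]. rewrite (is_series_unique a l Hl). apply is_series_sumN in Hl.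
  assert (Rbar_le 0 l). { apply (is_lim_seq_le (fun _ => 0) (sumN a)); auto.
    intros; apply sumN_nonneg; auto. apply is_lim_seq_const. } auto.
Qed.

Lemma Phi_Psi_bound x y i : dom x y -> (2 <= i)%nat -> 0 <= Phi x y i <= Psi x y i /\ Psi x y i <= 4.
Proof.
  intros D hi. unfold Phi, Psi. split; [split|].
  - apply Series_ge0. intros; apply phi_nonneg; auto. apply ex_phi; auto.
  - apply Series_le. intros n; split; [apply phi_nonneg|apply phi_le_psi]; auto. apply ex_psi; auto; lia.
  - apply Series_psi_le4; auto.
Qed.

Definition av (y : R) (i : nat) := INR i - y.
Definition uu (x y : R) (i : nat) := / (av y i * (av y i - x)).

Lemma av_pos y i : 0 <= y <= 1/4 -> (1 <= i)%nat -> 3/4 <= av y i.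
Proof. intros hy hi. unfold av. apply le_INR in hi. simpl in hi. lra. Qed.

Lemma Psi_tele1 x y i : dom x y -> (1 <= i)%nat ->
  Psi x y i / av y i - Psi x y (S i) / av y (S i) = uu x y i.
Proof.
  intros D hi. pose proof (Psi_rel x y i D hi) as H. unfold uu, av. rewrite S_INR.
  pose proof (av_pos y i (proj2 D) hi) as Ha. unfold av in Ha. destruct D as [[hx1 hx2] _].
  replace (Psi x y i / (INR i - y) - Psi x y (S i) / (INR i + 1 - y))
    with (((INR i + 1 - y) * Psi x y i - (INR i - y) * Psi x y (S i)) / ((INR i - y) * (INR i + 1 - y))) by (field; lra).
  rewrite H. field. lra.
Qed.

Definition Up x y N := sumN (fun n => uu x y (S n)) N.
Definition U0 x y := Psi x y 1 / av y 1.

Lemma Psi_tele x y N : dom x y -> Psi x y (S N) / av y (S N) = U0 x y - Up x y N.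
Proof.
  intros D. induction N. unfold Up; simpl; unfold U0; ring.
  unfold Up in *. rewrite sumN_S. pose proof (Psi_tele1 x y (S N) D ltac:(lia)). lra.
Qed.

Lemma Phi_tele1 x y i : dom x y -> (1 <= i)%nat ->
  Phi x y i / av y i - Phi x y (S i) / av y (S i) = (U0 x y - Up x y i) / av y i.
Proof.
  intros D hi. pose proof (Phi_rel x y i D) as H. rewrite <- Psi_tele; auto.
  pose proof (av_pos y i (proj2 D) hi) as Ha. unfold av in *. rewrite S_INR in *.
  replace (Phi x y i / (INR i - y) - Phi x y (S i) / (INR i + 1 - y))
    with (((INR i + 1 - y) * Phi x y i - (INR i - y) * Phi x y (S i)) / ((INR i - y) * (INR i + 1 - y))) by (field; lra).
  rewrite H. field. lra.
Qed.

Definition Wp x y N := sumN (fun n => (U0 x y - Up x y (S n)) / av y (S n)) N.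

Lemma Phi_tele x y N : dom x y -> Phi x y (S N) / av y (S N) = Phi x y 1 / av y 1 - Wp x y N.
Proof.
  intros D. induction N. unfold Wp; simpl; ring.
  unfold Wp in *. rewrite sumN_S. pose proof (Phi_tele1 x y (S N) D ltac:(lia)). lra.
Qed.

Lemma Phi0_eq x y : dom x y -> Phi x y 0 = U0 x y - y * (Phi x y 1 / av y 1).
Proof.
  intros D. pose proof (Phi_rel x y 0 D) as H. unfold U0, av. simpl (INR 0) in *. simpl (INR 1).
  destruct D as [_ [hy1 hy2]]. apply (Rmult_eq_reg_l (0 + 1 - y)). 2: lra.
  rewrite <- H. field. lra.
Qed.

Definition Qs (y : R) (n : nat) := sumN (fun t => / av y (S t)) n.
Definition rr (y : R) (n : nat) := 1 - y * Qs y n.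

Lemma uQ_partial x y N :
  sumN (fun n => uu x y (S n) * Qs y n) N = Up x y N * Qs y N - sumN (fun n => Up x y (S n) / av y (S n)) N.
Proof.
  induction N. unfold Up, Qs; simpl; ring.
  rewrite !sumN_S, IHN. unfold Up, Qs. rewrite !sumN_S. unfold Rdiv. ring.
Qed.

Lemma target_partial x y N :
  sumN (fun n => uu x y (S n) * rr y n) N = Up x y N - y * (Wp x y N - (U0 x y - Up x y N) * Qs y N).
Proof.
  unfold rr. rewrite (sumN_ext _ (fun n => uu x y (S n) - y * (uu x y (S n) * Qs y n))) by (intros; ring).
  rewrite sumN_minus, sumN_scal, uQ_partial. fold (Up x y N).
  unfold Wp. rewrite (sumN_ext (fun n => (U0 x y - Up x y (S n)) / av y (S n)) (fun n => U0 x y * / av y (S n) - Up x y (S n) / av y (S n))) by (intros; unfold Rdiv; ring).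
  rewrite sumN_minus, sumN_scal. fold (Qs y N). ring.
Qed.

Lemma Qs_bound y n : 0 <= y <= 1/4 -> 0 <= Qs y n <= 4/3 * Hr 1 n.
Proof.
  intros hy. unfold Qs. rewrite Hr_sumN. rewrite <- sumN_scal. split.
  - apply sumN_nonneg. intros i _. pose proof (av_pos y (S i) hy ltac:(lia)). apply Rlt_le, Rinv_0_lt_compat; lra.
  - apply sumN_le. intros i _. pose proof (av_pos y (S i) hy ltac:(lia)). pose proof (INR_S_ge1 i).
    unfold av in *. rewrite pow_1.
    apply Rmult_le_reg_r with ((INR (S i) - y) * INR (S i)). nra.
    replace (/ (INR (S i) - y) * ((INR (S i) - y) * INR (S i))) with (INR (S i)) by (field; lra).
    replace (4 / 3 * / INR (S i) * ((INR (S i) - y) * INR (S i))) with (4/3 * (INR (S i) - y)) by (field; lra).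
    lra.
Qed.

Lemma av_SS y n : 0 <= y <= 1/4 -> INR (S n) <= av y (S (S n)) /\ 3/4 * INR (S (S n)) <= av y (S (S n)).
Proof. intros hy. unfold av. rewrite (S_INR (S n)). pose proof (INR_S_ge1 n). lra. Qed.

Lemma lim_U x y : dom x y -> is_lim_seq (fun N => U0 x y - Up x y N) 0.
Proof.
  intros D. apply is_lim_seq_incr_1.
  apply (lim0_bound _ (fun n => 4 / INR (S n))). 2: apply lim_inv_S.
  intros n. rewrite <- Psi_tele by auto. destruct (Phi_Psi_bound x y (S (S n)) D ltac:(lia)) as [[h1 h2] h3].
  pose proof (av_SS y n (proj2 D)) as [a1 a2]. pose proof (INR_S_pos n).
  rewrite Rabs_pos_eq by (apply Rmult_le_pos; [lra| apply Rlt_le, Rinv_0_lt_compat; lra]).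
  unfold Rdiv. apply Rle_trans with (4 * / av y (S (S n))).
  apply Rmult_le_compat_r. apply Rlt_le, Rinv_0_lt_compat; lra. lra.
  apply Rmult_le_compat_l. lra. apply Rinv_le_contravar; lra.
Qed.

Lemma lim_W x y : dom x y -> is_lim_seq (fun N => Phi x y 1 / av y 1 - Wp x y N) 0.
Proof.
  intros D. apply is_lim_seq_incr_1.
  apply (lim0_bound _ (fun n => 4 / INR (S n))). 2: apply lim_inv_S.
  intros n. rewrite <- Phi_tele by auto. destruct (Phi_Psi_bound x y (S (S n)) D ltac:(lia)) as [[h1 h2] h3].
  pose proof (av_SS y n (proj2 D)) as [a1 a2]. pose proof (INR_S_pos n).
  rewrite Rabs_pos_eq by (apply Rmult_le_pos; [lra| apply Rlt_le, Rinv_0_lt_compat; lra]).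
  unfold Rdiv. apply Rle_trans with (4 * / av y (S (S n))).
  apply Rmult_le_compat_r. apply Rlt_le, Rinv_0_lt_compat; lra. lra.
  apply Rmult_le_compat_l. lra. apply Rinv_le_contravar; lra.
Qed.

Lemma lim_X x y : dom x y -> is_lim_seq (fun N => (U0 x y - Up x y N) * Qs y N) 0.
Proof.
  intros D. apply is_lim_seq_incr_1.
  apply (lim0_bound _ (fun n => 64/9 * (Hr 1 (S n) / INR (S (S n))))).
  2:{ replace (Finite 0) with (Rbar_mult (64/9) 0) by (simpl; f_equal; ring).
      apply (is_lim_seq_scal_l (fun n => Hr 1 (S n) / INR (S (S n)))).
      apply (is_lim_seq_incr_1 (fun n => Hr 1 n / INR (S n))). apply H1_over_lim. }
  intros n. rewrite <- Psi_tele by auto. destruct (Phi_Psi_bound x y (S (S n)) D ltac:(lia)) as [[h1 h2] h3].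
  pose proof (av_SS y n (proj2 D)) as [a1 a2]. pose proof (INR_S_pos n). pose proof (INR_S_pos (S n)).
  pose proof (Qs_bound y (S n) (proj2 D)) as [q1 q2].
  set (A := av y (S (S n))) in *. set (B := INR (S (S n))) in *.
  rewrite Rabs_pos_eq.
  2:{ apply Rmult_le_pos; auto. apply Rmult_le_pos; [lra| apply Rlt_le, Rinv_0_lt_compat; lra]. }
  apply Rle_trans with (4 / A * (4/3 * Hr 1 (S n))).
  { apply Rmult_le_compat; auto. apply Rmult_le_pos; [lra| apply Rlt_le, Rinv_0_lt_compat; lra].
    unfold Rdiv. apply Rmult_le_compat_r. apply Rlt_le, Rinv_0_lt_compat; lra. lra. }
  pose proof (Hr_nonneg 1 (S n)).
  replace (4 / A * (4 / 3 * Hr 1 (S n))) with (16/3 * Hr 1 (S n) * / A) by (field; lra).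
  replace (64 / 9 * (Hr 1 (S n) / B)) with (16/3 * Hr 1 (S n) * (4/3 * / B)) by (field; lra).
  apply Rmult_le_compat_l. lra.
  replace (4/3 * / B) with (/ (3/4 * B)) by (field; lra). apply Rinv_le_contravar; lra.
Qed.

Theorem core x y : dom x y ->
  is_series (phi x y 0) (Phi x y 0) /\ is_series (fun n => uu x y (S n) * rr y n) (Phi x y 0).
Proof.
  intros D. split. apply Series_correct, ex_phi; auto.
  apply is_series_sumN.
  apply (is_lim_seq_ext (fun N => U0 x y - (U0 x y - Up x y N)
        - y * ((Phi x y 1 / av y 1 - (Phi x y 1 / av y 1 - Wp x y N)) - (U0 x y - Up x y N) * Qs y N))).
  { intros N. rewrite target_partial. ring. }
  rewrite Phi0_eq by auto.
  replace (U0 x y - y * (Phi x y 1 / av y 1)) with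
     (U0 x y - 0 - y * ((Phi x y 1 / av y 1 - 0) - 0)) by ring.
  apply is_lim_seq_minus'. apply is_lim_seq_minus'. apply is_lim_seq_const. apply lim_U; auto.
  apply is_lim_seq_mult'. apply is_lim_seq_const. apply is_lim_seq_minus'.
  apply is_lim_seq_minus'. apply is_lim_seq_const. apply lim_W; auto. apply lim_X; auto.
Qed.

Lemma sumN_add f a b : sumN f (a + b) = sumN f a + sumN (fun i => f (a + i)%nat) b.
Proof. induction b. rewrite Nat.add_0_r; simpl; ring. rewrite Nat.add_succ_r, !sumN_S, IHb. ring. Qed.

Lemma sumN_term_le f K i : (forall j, (j < K)%nat -> 0 <= f j) -> (i < K)%nat -> f i <= sumN f K.
Proof.
  induction K; intros H hi. lia. rewrite sumN_S.
  destruct (Nat.eq_dec i K). subst. pose proof (sumN_nonneg f K ltac:(intros; apply H; lia)). lra.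
  pose proof (IHK ltac:(intros; apply H; lia) ltac:(lia)). pose proof (H K ltac:(lia)). lra.
Qed.

Lemma is_series_zero : is_series (fun _ => 0) 0.
Proof. apply is_series_sumN. apply (is_lim_seq_ext (fun _ => 0)). intros n. induction n; simpl; auto. rewrite <- IHn; ring.
  apply is_lim_seq_const. Qed.

Lemma is_series_fin K (f : nat -> nat -> R) (L : nat -> R) :
  (forall i, (i < K)%nat -> is_series (f i) (L i)) ->
  is_series (fun n => sumN (fun i => f i n) K) (sumN L K).
Proof.
  induction K; intros H. simpl. apply is_series_zero.
  simpl. apply is_series_plusR. apply IHK. intros; apply H; lia. apply H; lia.
Qed.

Lemma pow_le1 x n : 0 <= x <= 1 -> x ^ n <= 1.
Proof. intros h. rewrite <- (pow1 n). apply pow_incr. lra. Qed.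

Lemma Rabs_pow_le1 x i : 0 <= x <= 1 -> Rabs (x ^ S i) <= x.
Proof. intros hx. rewrite Rabs_pos_eq by (apply pow_le; lra). simpl.
  pose proof (pow_le x i (proj1 hx)). assert (x ^ i <= 1) by (apply pow_le1; lra). nra. Qed.

Lemma c0_zero k (c : nat -> R) M d : 0 < d ->
  (forall x, 0 < x <= d -> Rabs (sumN (fun i => c i * x ^ i) (S k)) <= M * x ^ (S k)) -> c 0%nat = 0.
Proof.
  intros hd H.
  destruct (Req_dec (c 0%nat) 0) as [h|h]; auto. exfalso.
  set (C := Rabs M + sumN (fun i => Rabs (c (S i))) k + 1).
  assert (hS : 0 <= sumN (fun i => Rabs (c (S i))) k) by (apply sumN_nonneg; intros; apply Rabs_pos).
  assert (hC : 0 < C) by (unfold C; pose proof (Rabs_pos M); lra).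
  assert (hc : 0 < Rabs (c 0%nat)) by (apply Rabs_pos_lt; auto).
  set (x := Rmin (Rmin d 1) (Rabs (c 0%nat) / (2 * C))).
  assert (hx : 0 < x) by (unfold x; repeat apply Rmin_glb_lt; try lra; apply Rdiv_lt_0_compat; lra).
  assert (hx1 : x <= d) by (unfold x; eapply Rle_trans; [apply Rmin_l|apply Rmin_l]).
  assert (hx2 : x <= 1) by (unfold x; eapply Rle_trans; [apply Rmin_l|apply Rmin_r]).
  assert (hx3 : x <= Rabs (c 0%nat) / (2 * C)) by (unfold x; apply Rmin_r).
  specialize (H x (conj hx hx1)).
  rewrite sumN_shift in H.
  set (T := sumN (fun i => c (S i) * x ^ S i) k) in H. simpl pow in H. rewrite Rmult_1_r in H.
  assert (Rabs T <= x * sumN (fun i => Rabs (c (S i))) k).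
  { unfold T. eapply Rle_trans. apply sumN_abs. rewrite <- sumN_scal. apply sumN_le. intros i _.
    rewrite Rabs_mult. rewrite Rmult_comm. apply Rmult_le_compat_r. apply Rabs_pos. apply Rabs_pow_le1; lra. }
  assert (Rabs (c 0%nat) <= Rabs (c 0%nat + T) + Rabs T).
  { replace (c 0%nat) with ((c 0%nat + T) + - T) at 1 by ring. eapply Rle_trans. apply Rabs_triang. rewrite Rabs_Ropp; lra. }
  assert (x ^ k <= 1) by (apply pow_le1; lra).
  assert (0 <= x ^ k) by (apply pow_le; lra).
  assert (M * (x * x ^ k) <= Rabs M * x).
  { apply Rle_trans with (Rabs M * (x * x ^ k)). apply Rmult_le_compat_r. nra. apply Rle_abs.
    apply Rmult_le_compat_l. apply Rabs_pos. nra. }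
  assert (C * x <= Rabs (c 0%nat) / 2).
  { apply Rle_trans with (C * (Rabs (c 0%nat) / (2 * C))). apply Rmult_le_compat_l; lra.
    right; field; lra. }
  assert (C * x = Rabs M * x + x * sumN (fun i => Rabs (c (S i))) k + x) by (unfold C; ring).
  lra.
Qed.

Lemma poly_zero k : forall (c : nat -> R) M d, 0 < d ->
  (forall x, 0 < x <= d -> Rabs (sumN (fun i => c i * x ^ i) (S k)) <= M * x ^ (S k)) ->
  forall i, (i <= k)%nat -> c i = 0.
Proof.
  induction k; intros c M d hd H.
  - intros i hi. assert (i = 0%nat) by lia. subst. apply (c0_zero 0 c M d); auto.
  - assert (h0 : c 0%nat = 0) by (apply (c0_zero (S k) c M d); auto).
    intros i hi. destruct i as [|i]. auto.
    apply (IHk (fun i => c (S i)) M d hd); [|lia].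
    intros x hx. specialize (H x hx). rewrite sumN_shift, h0 in H. rewrite Rmult_0_l, Rplus_0_l in H.
    rewrite (sumN_ext _ (fun i => x * (c (S i) * x ^ i))) in H by (intros; simpl; ring).
    rewrite sumN_scal, Rabs_mult, Rabs_pos_eq in H by lra.
    destruct hx.
    apply Rmult_le_reg_l with x; auto. replace (x * (M * x ^ S k)) with (M * x ^ S (S k)) by (simpl; ring). auto.
Qed.

Lemma expand_value k (A : nat -> nat -> R) (RA : nat -> R) (MA : nat -> R) x L :
  (forall i, (i <= k)%nat -> ex_series (A i)) -> ex_series MA -> (forall n, Rabs (RA n) <= MA n) ->
  is_series (fun n => sumN (fun i => A i n * x ^ i) (S k) + x ^ (S k) * RA n) L ->
  L = sumN (fun i => Series (A i) * x ^ i) (S k) + x ^ (S k) * Series RA /\ Rabs (Series RA) <= Series MA.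
Proof.
  intros HA HM HR HL. split.
  - apply is_series_unique in HL. rewrite <- HL. apply is_series_unique.
    apply is_series_plusR.
    + apply (is_series_fin (S k) (fun i n => A i n * x ^ i)). intros i hi.
      apply is_series_scal_r. apply Series_correct, HA; lia.
    + apply is_series_scalR. apply Series_correct. apply (ex_series_cmp _ MA); auto.
  - apply Series_abs_le; auto.
Qed.

Lemma extract k d (A B : nat -> nat -> R) (RA RB : R -> nat -> R) (MA MB : nat -> R) :
  0 < d ->
  (forall i, (i <= k)%nat -> ex_series (A i)) -> (forall i, (i <= k)%nat -> ex_series (B i)) ->
  ex_series MA -> ex_series MB ->
  (forall x n, 0 < x <= d -> Rabs (RA x n) <= MA n) ->
  (forall x n, 0 < x <= d -> Rabs (RB x n) <= MB n) ->
  (forall x, 0 < x <= d -> exists L,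
      is_series (fun n => sumN (fun i => A i n * x ^ i) (S k) + x ^ (S k) * RA x n) L /\
      is_series (fun n => sumN (fun i => B i n * x ^ i) (S k) + x ^ (S k) * RB x n) L) ->
  forall i, (i <= k)%nat -> Series (A i) = Series (B i).
Proof.
  intros hd HA HB HMA HMB HRA HRB HL i hi.
  cut (Series (A i) - Series (B i) = 0). lra.
  apply (poly_zero k (fun i => Series (A i) - Series (B i)) (Series MA + Series MB) d hd); auto.
  intros x hx. destruct (HL x hx) as [L [H1 H2]].
  destruct (expand_value k A (RA x) MA x L HA HMA (fun n => HRA x n hx) H1) as [E1 B1].
  destruct (expand_value k B (RB x) MB x L HB HMB (fun n => HRB x n hx) H2) as [E2 B2].
  rewrite (sumN_ext _ (fun i => Series (A i) * x ^ i - Series (B i) * x ^ i)) by (intros; ring).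
  rewrite sumN_minus.
  replace (sumN (fun i => Series (A i) * x ^ i) (S k) - sumN (fun i => Series (B i) * x ^ i) (S k))
    with (x ^ S k * (Series (RB x) - Series (RA x))) by lra.
  rewrite Rabs_mult, Rabs_pos_eq by (apply pow_le; lra).
  rewrite Rmult_comm. apply Rmult_le_compat_r. apply pow_le; lra.
  eapply Rle_trans. apply Rabs_triang. rewrite Rabs_Ropp. lra.
Qed.

Fixpoint bprod (x : R) (n : nat) : R :=
  match n with O => 1 | S n' => bprod x n' * (1 + x / INR (S n')) end.
Fixpoint gprod (y : R) (n : nat) : R :=
  match n with O => 1 | S n' => gprod y n' * (INR (S n') / (INR (S n') - y)) end.

Lemma bprod_S x n : bprod x (S n) = bprod x n * (1 + x / INR (S n)). Proof. reflexivity. Qed.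
Lemma gprod_S y n : gprod y (S n) = gprod y n * (INR (S n) / (INR (S n) - y)). Proof. reflexivity. Qed.

Lemma Rp0_fact x y n : dom x y -> Rp x y 0 n = bprod x n * gprod y n.
Proof.
  intros D. induction n. simpl; ring. rewrite Rp_S, bprod_S, gprod_S, IHn.
  pose proof (den_pos x y 0 n D). simpl (INR 0) in *. pose proof (INR_S_pos n). field. lra.
Qed.

Lemma gprod_pos y n : 0 <= y <= 1/4 -> 0 < gprod y n.
Proof. intros hy. induction n. simpl; lra. rewrite gprod_S. pose proof (INR_S_ge1 n).
  apply Rmult_lt_0_compat; auto. apply Rdiv_lt_0_compat; lra. Qed.

Lemma bprod_poly x n : forall K, (n < K)%nat -> bprod x n = sumN (fun i => E i n * x ^ i) K.
Proof.
  induction n; intros K hK.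
  - destruct K as [|K]. lia. rewrite sumN_shift. rewrite sumN_zero. simpl; ring.
    intros i _. simpl. ring.
  - destruct K as [|K]. lia. rewrite sumN_shift.
    rewrite (sumN_ext _ (fun i => E (S i) n * x ^ S i + x / INR (S n) * (E i n * x ^ i))).
    2:{ intros i hi. rewrite E_S. simpl pow. pose proof (INR_S_pos n). field. lra. }
    rewrite sumN_plus, sumN_scal. rewrite bprod_S.
    rewrite <- (IHn K) by lia.
    assert (Hb := IHn (S K) ltac:(lia)). rewrite sumN_shift in Hb.
    rewrite !E_0 in *. simpl pow in *.
    replace (bprod x n * (1 + x / INR (S n))) with (bprod x n + x / INR (S n) * bprod x n) by ring. lra.
Qed.

Definition rhoE k x n := sumN (fun i => E (S k + i) n * x ^ i) (S n).

Lemma b_split k x n : bprod x n = sumN (fun i => E i n * x ^ i) (S k) + x ^ (S k) * rhoE k x n.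
Proof.
  rewrite (bprod_poly x n (S k + S n)) by lia. rewrite sumN_add. f_equal.
  unfold rhoE. rewrite <- sumN_scal. apply sumN_ext. intros i _. rewrite pow_add. ring.
Qed.

Lemma rhoE_bounds k x d n : 0 <= x <= d -> 0 <= rhoE k x n <= rhoE k d n.
Proof.
  intros hx. unfold rhoE. split.
  - apply sumN_nonneg. intros i _. apply Rmult_le_pos. apply E_nonneg. apply pow_le; lra.
  - apply sumN_le. intros i _. apply Rmult_le_compat_l. apply E_nonneg. apply pow_incr; lra.
Qed.

Lemma sumN_E_nonneg x n K : 0 <= x -> 0 <= sumN (fun i => E i n * x ^ i) K.
Proof. intros hx. apply sumN_nonneg. intros. apply Rmult_le_pos. apply E_nonneg. apply pow_le; lra. Qed.

Lemma rhoE_le_b k d n : 0 <= d -> d ^ (S k) * rhoE k d n <= bprod d n.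
Proof. intros hd. rewrite (b_split k d n). pose proof (sumN_E_nonneg d n (S k) hd). lra. Qed.

Lemma E_le_b i d n : 0 <= d -> E i n * d ^ i <= bprod d n.
Proof.
  intros hd. rewrite (bprod_poly d n (S (i + n))) by lia.
  apply (sumN_term_le (fun i => E i n * d ^ i)). intros. apply Rmult_le_pos. apply E_nonneg. apply pow_le; lra. lia.
Qed.

Lemma av_ge y n : 0 <= y <= 1/4 -> 3/4 * INR (S n) <= av y (S n).
Proof. intros hy. unfold av. pose proof (INR_S_ge1 n). lra. Qed.

Lemma inv_pow_bound a s p : 1 <= s -> 3/4 * s <= a -> (2 <= p)%nat -> / a ^ p <= (4/3) ^ p * / s ^ 2.
Proof.
  intros hs ha hp. assert (0 < a) by lra.
  rewrite <- pow_inv. 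
  apply Rle_trans with ((4/3 * / s) ^ p).
  { apply pow_incr. split. apply Rlt_le, Rinv_0_lt_compat; lra.
    apply Rmult_le_reg_r with (a * s). nra. replace (/ a * (a * s)) with s by (field; lra).
    replace (4 / 3 * / s * (a * s)) with (4/3 * a) by (field; lra). lra. }
  rewrite Rpow_mult_distr. apply Rmult_le_compat_l. apply pow_le; lra.
  rewrite pow_inv. apply Rinv_le_contravar. apply pow_lt; lra.
  replace p with (2 + (p - 2))%nat by lia. rewrite pow_add.
  assert (1 <= s ^ (p - 2)) by (apply pow_R1_Rle; lra). assert (0 < s ^ 2) by (apply pow_lt; lra). nra.
Qed.

Lemma rr_bound y n : 0 <= y <= 1/4 -> Rabs (rr y n) <= 1 + Hr 1 n.
Proof.
  intros hy. unfold rr. pose proof (Qs_bound y n hy) as [q1 q2]. pose proof (Hr_nonneg 1 n).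
  assert (0 <= y * Qs y n <= Hr 1 n) by (split; nra).
  unfold Rabs. destruct (Rcase_abs _); lra.
Qed.

Lemma geom_exp a x k : a <> 0 -> a - x <> 0 ->
  / (a - x) = sumN (fun i => x ^ i / a ^ (S i)) (S k) + x ^ (S k) / (a ^ (S k) * (a - x)).
Proof.
  intros h1 h2. induction k.
  - simpl. field. auto.
  - rewrite sumN_S, IHk. simpl pow. field. split; auto. split; auto. apply pow_nonzero; auto.
Qed.

Definition Acoef y i n := gprod y n * E i n / INR (S n) ^ 2.
Definition Bcoef y i n := rr y n / av y (S n) ^ (S (S i)).

Lemma Acoef_bound y i n : 0 <= y <= 1/4 -> 0 <= Acoef y i n <= phi (1/4) y 0 n / (1/4) ^ i.
Proof.
  intros hy. assert (D : dom (1/4) y) by (split; lra).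
  unfold Acoef, phi. rewrite Rp0_fact by auto. pose proof (gprod_pos y n hy). pose proof (INR_S_pos n).
  pose proof (E_nonneg i n). pose proof (E_le_b i (1/4) n ltac:(lra)).
  assert (0 < (1/4) ^ i) by (apply pow_lt; lra). assert (0 < INR (S n) ^ 2) by (apply pow_lt; lra).
  split. apply Rmult_le_pos. apply Rmult_le_pos; lra. apply Rlt_le, Rinv_0_lt_compat; lra.
  apply Rmult_le_reg_r with ((1/4)^i * INR (S n) ^ 2). nra.
  replace (gprod y n * E i n / INR (S n) ^ 2 * ((1 / 4) ^ i * INR (S n) ^ 2)) with (gprod y n * (E i n * (1/4)^i)) by (field; lra).
  replace (bprod (1 / 4) n * gprod y n / INR (S n) ^ 2 / (1 / 4) ^ i * ((1 / 4) ^ i * INR (S n) ^ 2)) with (gprod y n * bprod (1/4) n) by (field; lra).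
  apply Rmult_le_compat_l; lra.
Qed.

Lemma ex_phi14 y : 0 <= y <= 1/4 -> ex_series (phi (1/4) y 0).
Proof. intros hy. apply ex_phi. split; lra. Qed.

Lemma ex_scal_div (a : nat -> R) c : ex_series a -> ex_series (fun n => a n / c).
Proof. intros [l H]. exists (l * / c). apply (is_series_scal_r (/ c) a l H). Qed.

Lemma ex_Acoef y i : 0 <= y <= 1/4 -> ex_series (Acoef y i).
Proof.
  intros hy. apply (ex_series_cmp _ (fun n => phi (1/4) y 0 n / (1/4) ^ i)).
  intros n. pose proof (Acoef_bound y i n hy). rewrite Rabs_pos_eq; lra.
  apply ex_scal_div, ex_phi14; auto.
Qed.

Lemma ex_scal (a : nat -> R) c : ex_series a -> ex_series (fun n => c * a n).
Proof. intros [l H]. exists (c * l). apply is_series_scalR; auto. Qed.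

Lemma Bcoef_bound y i n : 0 <= y <= 1/4 -> Rabs (Bcoef y i n) <= (4/3) ^ (S (S i)) * gmaj n.
Proof.
  intros hy. unfold Bcoef, gmaj. pose proof (rr_bound y n hy). pose proof (av_ge y n hy).
  pose proof (INR_S_ge1 n). pose proof (inv_pow_bound (av y (S n)) (INR (S n)) (S (S i)) H1 H0 ltac:(lia)).
  assert (0 < av y (S n)) by lra.
  unfold Rdiv. rewrite Rabs_mult, Rabs_inv, (Rabs_pos_eq (av y (S n) ^ _)) by (apply pow_le; lra).
  assert (0 <= / av y (S n) ^ S (S i)) by (apply Rlt_le, Rinv_0_lt_compat, pow_lt; lra).
  apply Rle_trans with ((1 + Hr 1 n) * ((4 / 3) ^ S (S i) * / INR (S n) ^ 2)).
  - apply Rmult_le_compat. apply Rabs_pos. auto. auto. auto.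
  - unfold Rdiv; right; ring.
Qed.

Lemma ex_Bcoef y i : 0 <= y <= 1/4 -> ex_series (Bcoef y i).
Proof.
  intros hy. apply (ex_series_cmp _ (fun n => (4/3) ^ (S (S i)) * gmaj n)).
  intros n; apply Bcoef_bound; auto. apply ex_scal, ex_gmaj.
Qed.

Theorem xstage y k : 0 <= y <= 1/4 -> Series (Acoef y k) = Series (Bcoef y k).
Proof.
  intros hy.
  apply (extract k (1/4) (Acoef y) (Bcoef y)
    (fun x n => gprod y n * rhoE k x n / INR (S n) ^ 2)
    (fun x n => rr y n / (av y (S n) ^ (S (S k)) * (av y (S n) - x)))
    (fun n => phi (1/4) y 0 n / (1/4) ^ (S k))
    (fun n => 2 * ((4/3) ^ (S (S k)) * gmaj n))); auto; try lra.
  - intros; apply ex_Acoef; auto.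
  - intros; apply ex_Bcoef; auto.
  - apply ex_scal_div, ex_phi14; auto.
  - apply ex_scal, ex_scal, ex_gmaj.
  - intros x n hx. assert (D : dom (1/4) y) by (split; lra).
    pose proof (gprod_pos y n hy). pose proof (INR_S_pos n).
    pose proof (rhoE_bounds k x (1/4) n ltac:(lra)) as [r1 r2]. pose proof (rhoE_le_b k (1/4) n ltac:(lra)).
    unfold phi. rewrite Rp0_fact by auto.
    assert (0 < (1/4) ^ S k) by (apply pow_lt; lra). assert (0 < INR (S n) ^ 2) by (apply pow_lt; lra).
    rewrite Rabs_pos_eq.
    2:{ apply Rmult_le_pos. apply Rmult_le_pos; lra. apply Rlt_le, Rinv_0_lt_compat; lra. }
    apply Rmult_le_reg_r with ((1/4) ^ S k * INR (S n) ^ 2). nra.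
    replace (gprod y n * rhoE k x n / INR (S n) ^ 2 * ((1 / 4) ^ S k * INR (S n) ^ 2)) with (gprod y n * ((1/4) ^ S k * rhoE k x n)) by (field; lra).
    replace (bprod (1 / 4) n * gprod y n / INR (S n) ^ 2 / (1 / 4) ^ S k * ((1 / 4) ^ S k * INR (S n) ^ 2)) with (gprod y n * bprod (1/4) n) by (field; lra).
    apply Rmult_le_compat_l. lra. nra.
  - intros x n hx. pose proof (rr_bound y n hy). pose proof (av_ge y n hy). pose proof (INR_S_ge1 n).
    pose proof (inv_pow_bound (av y (S n)) (INR (S n)) (S (S k)) H1 H0 ltac:(lia)).
    assert (0 < av y (S n) ^ S (S k)) by (apply pow_lt; lra).
    assert (h1 : 1/2 <= av y (S n) - x) by lra.
    unfold Rdiv. rewrite Rabs_mult, Rabs_inv, Rabs_mult, (Rabs_pos_eq (av y (S n) ^ _)), (Rabs_pos_eq (_ - x)) by lra.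
    rewrite Rinv_mult. unfold gmaj.
    assert (/ (av y (S n) - x) <= 2) by (replace 2 with (/ (1/2)) by field; apply Rinv_le_contravar; lra).
    assert (0 <= / (av y (S n) - x)) by (apply Rlt_le, Rinv_0_lt_compat; lra).
    assert (0 <= / av y (S n) ^ S (S k)) by (apply Rlt_le, Rinv_0_lt_compat; lra).
    apply Rle_trans with ((1 + Hr 1 n) * ((4 / 3) ^ S (S k) * / INR (S n) ^ 2 * 2)).
    apply Rmult_le_compat; auto. apply Rabs_pos. apply Rmult_le_pos; auto. apply Rmult_le_compat; auto.
    unfold Rdiv. right; ring.
  - intros x hx. assert (D : dom x y) by (split; lra).
    destruct (core x y D) as [H1 H2]. exists (Phi x y 0). split.
    + apply (is_series_extR (phi x y 0)); auto. intros n. unfold phi. rewrite Rp0_fact by auto.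
      rewrite (b_split k x n). pose proof (INR_S_pos n).
      rewrite (sumN_ext (fun i => Acoef y i n * x ^ i) (fun i => gprod y n / INR (S n) ^ 2 * (E i n * x ^ i))) by (intros; unfold Acoef; field; lra).
      rewrite sumN_scal. field. lra.
    + apply (is_series_extR (fun n => uu x y (S n) * rr y n)); auto. intros n.
      unfold uu. pose proof (av_ge y n hy). pose proof (INR_S_ge1 n).
      assert (ha : av y (S n) <> 0) by lra. assert (hb : av y (S n) - x <> 0) by lra.
      rewrite Rinv_mult. rewrite (geom_exp (av y (S n)) x k ha hb).
      rewrite (sumN_ext (fun i => Bcoef y i n * x ^ i) (fun i => rr y n * / av y (S n) * (x ^ i / av y (S n) ^ S i))).
      2:{ intros i hi. unfold Bcoef. simpl pow. field. split; auto. apply pow_nonzero; auto. }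
      rewrite sumN_scal. simpl pow. field. split; auto. split; auto. apply pow_nonzero; auto.
Qed.

Definition h2 (n : nat) := (Hr 1 n ^ 2 + Hr 2 n) / 2.

Fixpoint sgm (y : R) (n : nat) : R :=
  match n with
  | O => 0
  | S n' => INR (S n') / (INR (S n') - y) *
      (sgm y n' + / INR (S n') ^ 3 + Hr 1 n' / INR (S n') ^ 2 + h2 n' / INR (S n'))
  end.

Lemma sig_S y n : sgm y (S n) = INR (S n) / (INR (S n) - y) *
      (sgm y n + / INR (S n) ^ 3 + Hr 1 n / INR (S n) ^ 2 + h2 n / INR (S n)).
Proof. reflexivity. Qed.

Lemma h2_nonneg n : 0 <= h2 n.
Proof. unfold h2. pose proof (Hr_nonneg 2 n). pose proof (pow2_ge_0 (Hr 1 n)). lra. Qed.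

Lemma gprod_exp y n : 0 <= y <= 1/4 ->
  gprod y n = 1 + y * Hr 1 n + y ^ 2 * h2 n + y ^ 3 * sgm y n.
Proof.
  intros hy. induction n. unfold h2; simpl; field.
  rewrite gprod_S, sig_S, IHn. unfold h2. rewrite !Hr_S. pose proof (INR_S_ge1 n).
  field. lra.
Qed.

Lemma sig_bounds y n : 0 <= y <= 1/4 -> 0 <= sgm y n <= sgm (1/4) n.
Proof.
  intros hy. induction n. simpl; lra.
  rewrite !sig_S. pose proof (INR_S_ge1 n). pose proof (Hr_nonneg 1 n). pose proof (h2_nonneg n).
  set (s := INR (S n)) in *.
  assert (0 <= / s ^ 3) by (apply Rlt_le, Rinv_0_lt_compat, pow_lt; lra).
  assert (0 <= Hr 1 n / s ^ 2) by (apply Rmult_le_pos; [lra| apply Rlt_le, Rinv_0_lt_compat, pow_lt; lra]).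
  assert (0 <= h2 n / s) by (apply Rmult_le_pos; [lra| apply Rlt_le, Rinv_0_lt_compat; lra]).
  assert (0 <= s / (s - y)) by (apply Rmult_le_pos; [lra| apply Rlt_le, Rinv_0_lt_compat; lra]).
  assert (s / (s - y) <= s / (s - 1/4)).
  { unfold Rdiv. apply Rmult_le_compat_l. lra. apply Rinv_le_contravar; lra. }
  split. apply Rmult_le_pos; lra.
  apply Rmult_le_compat; lra.
Qed.

Lemma gprod14 n : 1 + 1/4 * Hr 1 n + (1/4)^2 * h2 n + (1/4)^3 * sgm (1/4) n = gprod (1/4) n.
Proof. rewrite gprod_exp; [ring|lra]. Qed.

Definition Ac (k : nat) (i : nat) (n : nat) : R :=
  match i with
  | O => E k n / INR (S n) ^ 2
  | 1%nat => E k n * Hr 1 n / INR (S n) ^ 2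
  | _ => E k n * h2 n / INR (S n) ^ 2
  end.

Lemma Acoef14_ge k n : 0 <= Acoef (1/4) k n.
Proof. pose proof (Acoef_bound (1/4) k n ltac:(lra)). lra. Qed.

Lemma Ac_helper k n c : 0 <= c <= 16 * gprod (1/4) n ->
  0 <= c * (E k n / INR (S n) ^ 2) <= 16 * Acoef (1/4) k n.
Proof.
  intros hc. pose proof (E_nonneg k n). pose proof (INR_S_pos n).
  assert (0 <= E k n / INR (S n) ^ 2) by (apply Rmult_le_pos; [lra| apply Rlt_le, Rinv_0_lt_compat, pow_lt; lra]).
  replace (16 * Acoef (1 / 4) k n) with ((16 * gprod (1/4) n) * (E k n / INR (S n) ^ 2)) by (unfold Acoef, Rdiv; ring).
  split. apply Rmult_le_pos; lra. apply Rmult_le_compat_r; lra.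
Qed.

Lemma Ac_bound k i n : 0 <= Ac k i n <= 16 * Acoef (1/4) k n.
Proof.
  pose proof (gprod14 n). pose proof (sig_bounds (1/4) n ltac:(lra)) as [s1 _].
  pose proof (Hr_nonneg 1 n). pose proof (h2_nonneg n).
  assert (0 <= (1/4)^3 * sgm (1/4) n) by (apply Rmult_le_pos; [apply pow_le; lra| lra]).
  assert (0 <= (1/4) * Hr 1 n) by lra. assert (0 <= (1/4)^2 * h2 n) by (apply Rmult_le_pos; [apply pow_le; lra| lra]).
  destruct i as [|[|i]]; unfold Ac.
  - replace (E k n / INR (S n) ^ 2) with (1 * (E k n / INR (S n) ^ 2)) by ring. apply Ac_helper. simpl in *. lra.
  - replace (E k n * Hr 1 n / INR (S n) ^ 2) with (Hr 1 n * (E k n / INR (S n) ^ 2)) by (unfold Rdiv; ring).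
    apply Ac_helper. simpl in *. lra.
  - replace (E k n * h2 n / INR (S n) ^ 2) with (h2 n * (E k n / INR (S n) ^ 2)) by (unfold Rdiv; ring).
    apply Ac_helper. simpl in *. lra.
Qed.

Lemma ex_Ac k i : ex_series (Ac k i).
Proof.
  apply (ex_series_cmp _ (fun n => 16 * Acoef (1/4) k n)).
  intros n. pose proof (Ac_bound k i n). rewrite Rabs_pos_eq; lra.
  apply ex_scal, ex_Acoef; lra.
Qed.

Definition RAc k y n := E k n * sgm y n / INR (S n) ^ 2.

Lemma RAc_bound k y n : 0 <= y <= 1/4 -> Rabs (RAc k y n) <= 64 * Acoef (1/4) k n.
Proof.
  intros hy. pose proof (gprod14 n). pose proof (sig_bounds y n hy) as [s1 s2].
  pose proof (Hr_nonneg 1 n). pose proof (h2_nonneg n). pose proof (E_nonneg k n). pose proof (INR_S_pos n).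
  assert (0 <= E k n / INR (S n) ^ 2) by (apply Rmult_le_pos; [lra| apply Rlt_le, Rinv_0_lt_compat, pow_lt; lra]).
  replace (RAc k y n) with (sgm y n * (E k n / INR (S n) ^ 2)) by (unfold RAc, Rdiv; ring).
  replace (64 * Acoef (1 / 4) k n) with ((64 * gprod (1/4) n) * (E k n / INR (S n) ^ 2)) by (unfold Acoef, Rdiv; ring).
  rewrite Rabs_pos_eq by (apply Rmult_le_pos; lra).
  apply Rmult_le_compat_r; auto.
  assert (0 <= (1/4) * Hr 1 n) by lra. assert (0 <= (1/4)^2 * h2 n) by (apply Rmult_le_pos; [apply pow_le; lra| lra]).
  simpl in *. lra.
Qed.

Lemma Acoef_exp k y n : 0 <= y <= 1/4 ->
  Acoef y k n = sumN (fun i => Ac k i n * y ^ i) 3 + y ^ 3 * RAc k y n.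
Proof.
  intros hy. unfold Acoef, RAc. rewrite gprod_exp by auto. cbn [sumN Ac]. pose proof (INR_S_pos n).
  field. lra.
Qed.

Fixpoint cc (p : nat) : R := match p with O => 0 | S p' => cc p' + INR (S p') end.
Fixpoint tau (p : nat) (z : R) : R := match p with O => 0 | S p' => (cc (S p') + tau p' z) / (1 - z) end.
Fixpoint Kt (p : nat) : R := match p with O => 0 | S p' => 4/3 * (cc (S p') + Kt p') end.

Lemma cc_nonneg p : 0 <= cc p.
Proof. induction p. simpl; lra. change (cc (S p)) with (cc p + INR (S p)). pose proof (pos_INR (S p)). lra. Qed.

Lemma cc_val p : cc p = INR p * (INR p + 1) / 2.
Proof. induction p. simpl; field. change (cc (S p)) with (cc p + INR (S p)). rewrite IHp, S_INR. field. Qed.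

Lemma tau_exp p z : z <> 1 -> / (1 - z) ^ p = 1 + INR p * z + cc p * z ^ 2 + z ^ 3 * tau p z.
Proof.
  intros hz. assert (1 - z <> 0) by lra. induction p.
  - simpl. field.
  - change ((1 - z) ^ S p) with ((1 - z) * (1 - z) ^ p). rewrite Rinv_mult, IHp.
    change (tau (S p) z) with ((cc (S p) + tau p z) / (1 - z)). change (cc (S p)) with (cc p + INR (S p)).
    rewrite S_INR. field. auto.
Qed.

Lemma tau_bound p z : 0 <= z <= 1/4 -> 0 <= tau p z <= Kt p.
Proof.
  intros hz. induction p. simpl; lra.
  change (tau (S p) z) with ((cc (S p) + tau p z) / (1 - z)). change (Kt (S p)) with (4/3 * (cc (S p) + Kt p)).
  pose proof (cc_nonneg (S p)). 
  assert (0 < / (1 - z) <= 4/3).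
  { split. apply Rinv_0_lt_compat; lra. replace (4/3) with (/ (3/4)) by field. apply Rinv_le_contravar; lra. }
  unfold Rdiv. split. apply Rmult_le_pos; lra.
  rewrite Rmult_comm. apply Rmult_le_compat; lra.
Qed.

Definition theta (y : R) (n : nat) := sumN (fun t => / (INR (S t) ^ 2 * (INR (S t) - y))) n.

Lemma Qs_exp y n : 0 <= y <= 1/4 -> Qs y n = Hr 1 n + y * Hr 2 n + y ^ 2 * theta y n.
Proof.
  intros hy. unfold Qs, theta. rewrite !Hr_sumN. rewrite <- !sumN_scal, <- !sumN_plus.
  apply sumN_ext. intros i _. unfold av. pose proof (INR_S_ge1 i). field. lra.
Qed.

Lemma theta_bound y n : 0 <= y <= 1/4 -> 0 <= theta y n <= 8/3.
Proof.
  intros hy. unfold theta. split.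
  - apply sumN_nonneg. intros i _. pose proof (INR_S_ge1 i). apply Rlt_le, Rinv_0_lt_compat.
    apply Rmult_lt_0_compat. apply pow_lt; lra. lra.
  - apply Rle_trans with (sumN (fun t => 4/3 * / INR (S t) ^ 2) n).
    + apply sumN_le. intros i _. pose proof (INR_S_ge1 i).
      assert (0 < INR (S i) ^ 2) by (apply pow_lt; lra).
      rewrite Rinv_mult. rewrite Rmult_comm. apply Rmult_le_compat_r. apply Rlt_le, Rinv_0_lt_compat; lra.
      replace (4/3) with (/ (3/4)) by field. apply Rinv_le_contravar; lra.
    + rewrite sumN_scal. pose proof (inv_sq_bound n). lra.
Qed.

Definition Zs (q : nat) (n : nat) := / INR (S n) ^ q.
Definition Zrs (q r : nat) (n : nat) := / INR (S n) ^ q * Hr r n.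

Lemma inv_pow_le2 s q : 1 <= s -> (2 <= q)%nat -> / s ^ q <= / s ^ 2.
Proof.
  intros hs hq. apply Rinv_le_contravar. apply pow_lt; lra. apply Rle_pow; auto.
Qed.

Lemma ex_Z q : (2 <= q)%nat -> ex_series (Zs q).
Proof.
  intros hq. apply (ex_series_cmp _ (fun n => / INR (S n) ^ 2)). 2: apply ex_inv_sq.
  intros n. unfold Zs. pose proof (INR_S_ge1 n). rewrite Rabs_pos_eq by (apply Rlt_le, Rinv_0_lt_compat, pow_lt; lra).
  apply inv_pow_le2; auto.
Qed.

Lemma ex_Zr1 q : (2 <= q)%nat -> ex_series (Zrs q 1).
Proof.
  intros hq. apply (ex_series_cmp _ gmaj). 2: apply ex_gmaj.
  intros n. unfold Zrs, gmaj. pose proof (INR_S_ge1 n). pose proof (Hr_nonneg 1 n).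
  pose proof (inv_pow_le2 _ q H hq). assert (0 < / INR (S n) ^ q) by (apply Rinv_0_lt_compat, pow_lt; lra).
  rewrite Rabs_pos_eq by (apply Rmult_le_pos; lra). unfold Rdiv. rewrite Rmult_comm.
  apply Rmult_le_compat; lra.
Qed.

Lemma ex_Zr2 q : (2 <= q)%nat -> ex_series (Zrs q 2).
Proof.
  intros hq. apply (ex_series_cmp _ (fun n => 2 * / INR (S n) ^ 2)). 2: apply ex_2inv_sq.
  intros n. unfold Zrs. pose proof (INR_S_ge1 n). pose proof (Hr_nonneg 2 n). pose proof (H2_le2 n).
  pose proof (inv_pow_le2 _ q H hq). assert (0 < / INR (S n) ^ q) by (apply Rinv_0_lt_compat, pow_lt; lra).
  rewrite Rabs_pos_eq by (apply Rmult_le_pos; lra). rewrite Rmult_comm.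
  apply Rmult_le_compat; lra.
Qed.

Definition Bc (k : nat) (i : nat) (n : nat) : R :=
  let p := S (S k) in
  match i with
  | O => Zs p n
  | 1%nat => INR p * Zs (S p) n - Zrs p 1 n
  | _ => cc p * Zs (S (S p)) n - INR p * Zrs (S p) 1 n - Zrs p 2 n
  end.

Lemma ex_Bc k i : ex_series (Bc k i).
Proof.
  destruct i as [|[|i]]; unfold Bc.
  - apply ex_Z; lia.
  - apply (ex_series_minus (fun n => INR (S (S k)) * Zs (S (S (S k))) n) (Zrs (S (S k)) 1)).
    apply ex_scal, ex_Z; lia. apply ex_Zr1; lia.
  - apply (ex_series_minus (fun n => cc (S (S k)) * Zs (S (S (S (S k)))) n - INR (S (S k)) * Zrs (S (S (S k))) 1 n) (Zrs (S (S k)) 2)).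
    apply (ex_series_minus (fun n => cc (S (S k)) * Zs (S (S (S (S k)))) n) (fun n => INR (S (S k)) * Zrs (S (S (S k))) 1 n)).
    apply ex_scal, ex_Z; lia. apply ex_scal, ex_Zr1; lia. apply ex_Zr2; lia.
Qed.

Definition RBc (k : nat) (y : R) (n : nat) : R :=
  let p := S (S k) in
  let s := INR (S n) in
  let a1 := INR p / s in
  let a2 := cc p / s ^ 2 in
  let a3 := tau p (y / s) / s ^ 3 in
  (- (a2 * Hr 1 n) - (a1 * Hr 2 n) - (y * a2 * Hr 2 n) + a3 * rr y n
     - theta y n * (1 + a1 * y + a2 * y ^ 2)) / s ^ p.

Lemma Bcoef_exp k y n : 0 <= y <= 1/4 ->
  Bcoef y k n = sumN (fun i => Bc k i n * y ^ i) 3 + y ^ 3 * RBc k y n.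
Proof.
  intros hy. unfold Bcoef, RBc. cbn [sumN Bc]. unfold Zs, Zrs.
  set (p := S (S k)). set (s := INR (S n)).
  assert (hs : 1 <= s) by apply INR_S_ge1.
  assert (e1 : s ^ S p = s * s ^ p) by reflexivity.
  assert (e2 : s ^ S (S p) = s * (s * s ^ p)) by reflexivity.
  rewrite e1, e2.
  assert (ea : av y (S n) = s * (1 - y / s)) by (unfold av; fold s; field; lra).
  rewrite ea, Rpow_mult_distr.
  assert (hz : 0 < 1 - y / s).
  { assert (y / s <= 1/4). { unfold Rdiv. apply Rle_trans with (y * 1). apply Rmult_le_compat_l. lra.
      replace 1 with (/1) by field. apply Rinv_le_contravar; lra. lra. } lra. }
  replace (rr y n / (s ^ p * (1 - y / s) ^ p)) with (rr y n * / s ^ p * / (1 - y / s) ^ p)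
    by (field; split; apply pow_nonzero; lra).
  rewrite tau_exp by lra.
  unfold rr. rewrite Qs_exp by auto.
  assert (0 < s ^ p) by (apply pow_lt; lra).
  field. split; lra.
Qed.

Definition KC0 k := let p := S (S k) in 2 * INR p + 2 * cc p + Kt p + 8/3 * (1 + INR p + cc p).
Definition KC1 k := let p := S (S k) in cc p + Kt p.

Lemma Kt_nonneg p : 0 <= Kt p.
Proof. pose proof (tau_bound p 0 ltac:(lra)). lra. Qed.

Lemma bound_lin A B X t : 0 <= A -> 0 <= B -> 0 <= X -> 0 <= t -> (A + B * X) * t <= (A + B) * ((1 + X) * t).
Proof. intros. apply Rle_trans with ((A + B) * (1 + X) * t). apply Rmult_le_compat_r; nra. right; ring. Qed.

Lemma RBc_bound k y n : 0 <= y <= 1/4 -> Rabs (RBc k y n) <= (KC0 k + KC1 k) * gmaj n.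
Proof.
  intros hy. unfold RBc, KC0, KC1, gmaj. set (p := S (S k)). set (s := INR (S n)).
  assert (hs : 1 <= s) by apply INR_S_ge1.
  pose proof (cc_nonneg p) as hcc. pose proof (Kt_nonneg p) as hKt. pose proof (pos_INR p) as hp.
  pose proof (Hr_nonneg 1 n) as hH. pose proof (Hr_nonneg 2 n) as hH2a. pose proof (H2_le2 n) as hH2b.
  pose proof (theta_bound y n hy) as [ht1 ht2]. pose proof (rr_bound y n hy) as hV.
  set (H := Hr 1 n) in *. set (H2 := Hr 2 n) in *. set (th := theta y n) in *. set (V := rr y n) in *.
  assert (a1b : 0 <= INR p / s <= INR p).
  { split. apply Rmult_le_pos; [lra| apply Rlt_le, Rinv_0_lt_compat; lra].
    apply Rmult_le_reg_r with s. lra. unfold Rdiv; rewrite Rmult_assoc, Rinv_l, Rmult_1_r by lra. nra. }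
  assert (hs2 : 1 <= s ^ 2) by (simpl; nra).
  assert (a2b : 0 <= cc p / s ^ 2 <= cc p).
  { split. apply Rmult_le_pos; [lra| apply Rlt_le, Rinv_0_lt_compat; lra].
    apply Rmult_le_reg_r with (s ^ 2). lra. unfold Rdiv; rewrite Rmult_assoc, Rinv_l, Rmult_1_r by lra. nra. }
  assert (hz : 0 <= y / s <= 1/4).
  { split. apply Rmult_le_pos; [lra| apply Rlt_le, Rinv_0_lt_compat; lra].
    apply Rmult_le_reg_r with s. lra. unfold Rdiv; rewrite Rmult_assoc, Rinv_l, Rmult_1_r by lra. nra. }
  pose proof (tau_bound p (y / s) hz) as [tb1 tb2].
  assert (hs3 : 1 <= s ^ 3) by (simpl; nra).
  assert (a3b : 0 <= tau p (y / s) / s ^ 3 <= Kt p).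
  { split. apply Rmult_le_pos; [lra| apply Rlt_le, Rinv_0_lt_compat; lra].
    apply Rmult_le_reg_r with (s ^ 3). lra. unfold Rdiv; rewrite Rmult_assoc, Rinv_l, Rmult_1_r by lra. nra. }
  set (a1 := INR p / s) in *. set (a2 := cc p / s ^ 2) in *. set (a3 := tau p (y / s) / s ^ 3) in *.
  assert (P1 : 0 <= a2 * H <= cc p * H) by (split; nra).
  assert (P2 : 0 <= a1 * H2 <= INR p * 2) by (split; nra).
  assert (P3 : 0 <= y * a2 * H2 <= cc p * 2).
  { assert (0 <= y * a2 <= cc p) by (split; nra). split; nra. }
  assert (P4 : Rabs (a3 * V) <= Kt p * (1 + H)).
  { rewrite Rabs_mult, Rabs_pos_eq by lra. apply Rmult_le_compat; try lra. apply Rabs_pos. }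
  assert (P5 : 0 <= th * (1 + a1 * y + a2 * y ^ 2) <= 8/3 * (1 + INR p + cc p)).
  { assert (0 <= a1 * y <= INR p) by (split; nra). assert (0 <= y ^ 2 <= 1) by (simpl; split; nra).
    assert (0 <= a2 * y ^ 2 <= cc p) by (split; nra). split; nra. }
  set (N := - (a2 * H) - a1 * H2 - y * a2 * H2 + a3 * V - th * (1 + a1 * y + a2 * y ^ 2)).
  assert (NB : Rabs N <= (2 * INR p + 2 * cc p + Kt p + 8/3 * (1 + INR p + cc p)) + (cc p + Kt p) * H).
  { assert (P4' : - (Kt p * (1 + H)) <= a3 * V <= Kt p * (1 + H)) by (unfold Rabs in P4; destruct (Rcase_abs (a3 * V)); lra).
    unfold N. apply Rabs_le. split; lra. }
  assert (hsp : 0 < s ^ p) by (apply pow_lt; lra).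
  assert (hsp2 : s ^ 2 <= s ^ p) by (apply Rle_pow; [lra| unfold p; lia]).
  unfold Rdiv. rewrite Rabs_mult, Rabs_inv, (Rabs_pos_eq (s ^ p)) by lra.
  set (C0 := 2 * INR p + 2 * cc p + Kt p + 8/3 * (1 + INR p + cc p)) in *.
  set (C1 := cc p + Kt p) in *.
  assert (hC0 : 0 <= C0) by (unfold C0; lra). assert (hC1 : 0 <= C1) by (unfold C1; lra).
  apply Rle_trans with ((C0 + C1 * H) * / s ^ 2).
  { apply Rmult_le_compat. apply Rabs_pos. apply Rlt_le, Rinv_0_lt_compat; lra. auto.
    apply Rinv_le_contravar; lra. }
  apply (bound_lin C0 C1 H (/ s ^ 2)); auto. apply Rlt_le, Rinv_0_lt_compat; lra.
Qed.

Theorem ystage k : Series (Ac k 1) = Series (Bc k 1) /\ Series (Ac k 2) = Series (Bc k 2).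
Proof.
  assert (H := extract 2 (1/4) (Ac k) (Bc k) (RAc k) (RBc k)
    (fun n => 64 * Acoef (1/4) k n) (fun n => (KC0 k + KC1 k) * gmaj n)).
  split; apply H; try lra; try lia.
  all: try (intros; apply ex_Ac); try (intros; apply ex_Bc).
  all: try (apply ex_scal, ex_Acoef; lra); try (apply ex_scal, ex_gmaj).
  all: try (intros y n hy; apply RAc_bound; lra); try (intros y n hy; apply RBc_bound; lra).
  all: intros y hy; exists (Series (Acoef y k)); split;
    [ apply (is_series_extR (Acoef y k)); [intros n; apply Acoef_exp; lra| apply Series_correct, ex_Acoef; lra]
    | rewrite xstage by lra; apply (is_series_extR (Bcoef y k)); [intros n; apply Bcoef_exp; lra| apply Series_correct, ex_Bcoef; lra]].
Qed.

From Stdlib Require Import Binomial.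

Lemma C_k3_2 k : C (k + 3) 2 = cc (S (S k)).
Proof.
  unfold C. replace (k + 3 - 2)%nat with (k + 1)%nat by lia.
  replace (k + 3)%nat with (S (S (k + 1))) by lia.
  rewrite !fact_simpl, !mult_INR. rewrite cc_val.
  pose proof (INR_fact_neq_0 (k + 1)).
  replace (INR (fact 2)) with 2 by (simpl; ring).
  rewrite !S_INR, plus_INR. simpl (INR 1).
  replace (INR (fact 0)) with 1 by reflexivity. replace (INR 0) with 0 by reflexivity.
  field. auto.
Qed.

Lemma shift_series (a : nat -> R) l : a O = 0 -> is_series a l -> is_series (fun m => a (S m)) l.
Proof.
  intros h0 H. apply (is_series_incr_1 a l). rewrite h0. 
  change (plus l 0) with (l + 0). rewrite Rplus_0_r. auto.
Qed.

Theorem mainTheorem19 (k : nat) (hk : (1 <= k)%nat) :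
  exists z3 z21 z4 z31 z22 : R,
    is_zeta1 (k + 3) z3 /\ is_zeta2 (k + 2) 1 z21 /\
    is_zeta1 (k + 4) z4 /\ is_zeta2 (k + 3) 1 z31 /\ is_zeta2 (k + 2) 2 z22 /\
    infinite_sum
      (fun m => let n := S m in
         Hr 1 n * P k (fun i => Hr i n) / (INR (S n)) ^ 2)
      (INR (k + 2) * z3 - z21) /\
    infinite_sum
      (fun m => let n := S m in
         / 2 * ((Hr 1 n ^ 2 + Hr 2 n) * P k (fun i => Hr i n)) / (INR (S n)) ^ 2)
      (C (k + 3) 2 * z4 - INR (k + 2) * z31 - z22).
Proof.
  set (p := S (S k)).
  assert (e2 : (k + 2)%nat = p) by (unfold p; lia).
  assert (e3 : (k + 3)%nat = S p) by (unfold p; lia).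
  assert (e4 : (k + 4)%nat = S (S p)) by (unfold p; lia).
  exists (Series (Zs (S p))), (Series (Zrs p 1)), (Series (Zs (S (S p)))), (Series (Zrs (S p) 1)), (Series (Zrs p 2)).
  rewrite C_k3_2. fold p. rewrite e2, e3, e4.
  destruct (ystage k) as [Y1 Y2].
  split; [|split; [|split; [|split; [|split; [|split]]]]].
  - apply is_series_Reals. apply Series_correct. apply ex_Z. lia.
  - apply is_series_Reals. apply Series_correct. apply ex_Zr1. unfold p; lia.
  - apply is_series_Reals. apply Series_correct. apply ex_Z. lia.
  - apply is_series_Reals. apply Series_correct. apply ex_Zr1. lia.
  - apply is_series_Reals. apply Series_correct. apply ex_Zr2. unfold p; lia.
  - apply is_series_Reals.
    assert (HB : Series (Bc k 1) = INR p * Series (Zs (S p)) - Series (Zrs p 1)).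
    { apply is_series_unique. apply (is_series_extR (fun n => INR p * Zs (S p) n - Zrs p 1 n)).
      intros n. reflexivity.
      apply is_series_minusR. apply is_series_scalR. apply Series_correct, ex_Z; lia.
      apply Series_correct, ex_Zr1; unfold p; lia. }
    rewrite <- HB, <- Y1.
    apply (is_series_extR (fun m => Ac k 1 (S m))).
    { intros m. cbv zeta. unfold Ac. rewrite P_eq_E. unfold Rdiv. ring. }
    apply shift_series. { unfold Ac. simpl Hr. unfold Rdiv. ring. }
    apply Series_correct, ex_Ac.
  - apply is_series_Reals.
    assert (HB : Series (Bc k 2) = cc p * Series (Zs (S (S p))) - INR p * Series (Zrs (S p) 1) - Series (Zrs p 2)).
    { apply is_series_unique. apply (is_series_extR (fun n => cc p * Zs (S (S p)) n - INR p * Zrs (S p) 1 n - Zrs p 2 n)).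
      intros n. reflexivity.
      apply is_series_minusR. apply is_series_minusR.
      apply is_series_scalR. apply Series_correct, ex_Z; lia.
      apply is_series_scalR. apply Series_correct, ex_Zr1; lia.
      apply Series_correct, ex_Zr2; unfold p; lia. }
    rewrite <- HB, <- Y2.
    apply (is_series_extR (fun m => Ac k 2 (S m))).
    { intros m. cbv zeta. unfold Ac, h2. rewrite P_eq_E. pose proof (INR_S_pos (S m)). field. lra. }
    apply shift_series. { unfold Ac. destruct k. lia. simpl E. unfold Rdiv. ring. }
    apply Series_correct, ex_Ac.
Qed.
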